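(* Every extreme point $x$ of $B_J$ is separated by partitions, and for any two consecutive elements $n_1<n_2$ of $\mathrm{supp}(x)$ we have $x(n_1)x(n_2)<0$.
   Context: For a real sequence $x=(x(n))_{n\in\mathbb N}$ let $\|x\|_J=\sup\bigl(\sum_{i=1}^n|\sum_{k\in I_i}x(k)|^2\bigr)^{1/2}$ over all $n$ and all families of pairwise disjoint intervals $I_1,\dots,I_n$ of $\mathbb N$ (intervals: nonempty sets of consecutive positive integers, possibly infinite). $J=\{x:\|x\|_J<\infty\}$ with closed unit ball $B_J$; for $x\in J$ and any interval $I$ the series $\sum_{k\in I}x(k)$ converges. $\mathrm{supp}(x)=\{n:x(n)\ne0\}$. A family of intervals $\mathcal I=\{I_i\}_{i\in F}$: $F=\{1,\dots,k\}$ or $F=\mathbb N$, each $I_i$ an interval, $\max I_i<\min I_{i+1}$ whenever $i+1\in F$; $\|x\|_{\mathcal I}=(\sum_{i\in F}|\sum_{k\in I_i}x(k)|^2)^{1/2}$; it is $x$-norming if $\|x\|_{\mathcal I}=\|x\|_J$. For nonempty $L\subset\mathbb N$, $\sup L=\max L$ if finite and $\infty$ otherwise. An $x$-norming partition is an $x$-norming family with $\{\min I_i,\max I_i\}\subset\mathrm{supp}(x)$ for all $i<\sup F$, and, if $F$ is finite, $\min I_i\in\mathrm{supp}(x)$ and $\sup I_i=\sup\mathrm{supp}(x)$ for $i=\sup F$. A vector $x\in J$ is separated by partitions if for any two consecutive elements $n_1<n_2$ of $\mathrm{supp}(x)$ there exists an $x$-norming partition in which $n_1$ and $n_2$ belong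 to different intervals. *)

(* Defs.v *)
From Stdlib Require Import Reals.
From Coquelicot Require Import Coquelicot.
Open Scope R_scope.

(* Sequences are indexed by nat; the paper's index k >= 1 corresponds to k-1. *)
Definition seqR := nat -> R.

(* An interval of nat: [lo, h] (hi = Some h, lo <= h) or [lo, oo) (hi = None). *)
Record interval := mkInterval { lo : nat; hi : option nat }.

Definition wf_interval (I : interval) : Prop :=
  match hi I with Some h => (lo I <= h)%nat | None => True end.

Definition in_interval (n : nat) (I : interval) : Prop :=
  (lo I <= n)%nat /\ match hi I with Some h => (n <= h)%nat | None => True end.

Definition interval_sum (x : seqR) (I : interval) (s : R) : Prop :=
  match hi I with
  | Some h => s = sum_n_m x (lo I) h
  | None => is_series (fun k => x (lo I + k)%nat) s
  end.

Fixpoint sum_lt (f : nat -> R) (n : nat) : R :=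
  match n with O => 0 | S m => sum_lt f m + f m end.

Definition Jvalues (x : seqR) (v : R) : Prop :=
  exists (n : nat) (I : nat -> interval) (s : nat -> R),
    (forall i, (i < n)%nat -> wf_interval (I i)) /\
    (forall i j, (i < n)%nat -> (j < n)%nat -> i <> j ->
        forall m, ~ (in_interval m (I i) /\ in_interval m (I j))) /\
    (forall i, (i < n)%nat -> interval_sum x (I i) (s i)) /\
    v = sqrt (sum_lt (fun i => (s i)^2) n).

(* ||x||_J as an extended real (+oo when x is not in J). *)
Definition Jnorm (x : seqR) : Rbar := Lub_Rbar (Jvalues x).

Definition inJ (x : seqR) : Prop := is_finite (Jnorm x).

Definition BJ (x : seqR) : Prop := Rbar_le (Jnorm x) (Finite 1).

Definition extreme_point_BJ (x : seqR) : Prop :=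
  BJ x /\
  forall (y z : seqR) (t : R), BJ y -> BJ z -> 0 < t < 1 ->
    (forall n, x n = t * y n + (1 - t) * z n) ->
    (forall n, y n = x n) /\ (forall n, z n = x n).

Definition in_supp (x : seqR) (n : nat) : Prop := x n <> 0.

(* A family of intervals indexed by F = {0,...,k-1} (size = Some k, k >= 1)
   or F = nat (size = None). *)
Record family := mkFamily { fsize : option nat; fint : nat -> interval }.

Definition in_F (F : family) (i : nat) : Prop :=
  match fsize F with Some k => (i < k)%nat | None => True end.

Definition wf_family (F : family) : Prop :=
  (match fsize F with Some k => (1 <= k)%nat | None => True end) /\
  (forall i, in_F F i -> wf_interval (fint F i)) /\
  (forall i, in_F F (S i) ->
     match hi (fint F i) with
     | Some h => (h < lo (fint F (S i)))%nat
     | None => False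
     end).

Definition norming (x : seqR) (F : family) : Prop :=
  wf_family F /\
  exists s : nat -> R,
    (forall i, in_F F i -> interval_sum x (fint F i) (s i)) /\
    match fsize F with
    | Some k => Finite (sqrt (sum_lt (fun i => (s i)^2) k)) = Jnorm x
    | None => exists L, is_series (fun i => (s i)^2) L /\ Finite (sqrt L) = Jnorm x
    end.

(* sup I = sup supp(x) *)
Definition sup_matches_supp (x : seqR) (I : interval) : Prop :=
  match hi I with
  | Some h => in_supp x h /\ (forall n, (h < n)%nat -> x n = 0)
  | None => forall N, exists n, (N < n)%nat /\ in_supp x n
  end.

Definition norming_partition (x : seqR) (F : family) : Prop :=
  norming x F /\
  match fsize F with
  | Some k =>
      (forall i, (S i < k)%nat ->
         in_supp x (lo (fint F i)) /\
         exists h, hi (fint F i) = Some h /\ in_supp x h) /\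
      in_supp x (lo (fint F (Nat.pred k))) /\
      sup_matches_supp x (fint F (Nat.pred k))
  | None =>
      forall i, in_supp x (lo (fint F i)) /\
         exists h, hi (fint F i) = Some h /\ in_supp x h
  end.

Definition consecutive_in_supp (x : seqR) (n1 n2 : nat) : Prop :=
  (n1 < n2)%nat /\ in_supp x n1 /\ in_supp x n2 /\
  forall m, (n1 < m < n2)%nat -> x m = 0.

Definition separated_by_partitions (x : seqR) : Prop :=
  inJ x /\
  forall n1 n2, consecutive_in_supp x n1 n2 ->
    exists F, norming_partition x F /\
      exists i j, in_F F i /\ in_F F j /\ i <> j /\
        in_interval n1 (fint F i) /\ in_interval n2 (fint F j).

(* Main.v *)
Require Import Defs.
From Stdlib Require Import Reals.
From Coquelicot Require Import Coquelicot.
From Stdlib Require Import Lra Lia ClassicalEpsilon Classical Bool List.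
Open Scope R_scope.


Lemma sum_lt_ext (f g : nat -> R) n :
  (forall i, (i < n)%nat -> f i = g i) -> sum_lt f n = sum_lt g n.
Proof.
  induction n as [|n IH]; intros H; simpl; auto.
  rewrite IH by (intros; apply H; lia). rewrite H by lia. auto.
Qed.

Lemma sum_lt_plus (f g : nat -> R) n :
  sum_lt (fun i => f i + g i) n = sum_lt f n + sum_lt g n.
Proof. induction n; simpl; [lra|rewrite IHn; lra]. Qed.

Lemma sum_lt_scal (f : nat -> R) c n :
  sum_lt (fun i => c * f i) n = c * sum_lt f n.
Proof. induction n; simpl; [lra|rewrite IHn; lra]. Qed.

Lemma sum_lt_le (f g : nat -> R) n :
  (forall i, (i < n)%nat -> f i <= g i) -> sum_lt f n <= sum_lt g n.
Proof.
  induction n as [|n IH]; intros H; simpl; [lra|].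
  assert (sum_lt f n <= sum_lt g n) by (apply IH; intros; apply H; lia).
  assert (f n <= g n) by (apply H; lia). lra.
Qed.

Lemma sum_lt_nonneg (f : nat -> R) n :
  (forall i, 0 <= f i) -> 0 <= sum_lt f n.
Proof. intros H; induction n; simpl; [lra|]. specialize (H n); lra. Qed.

Lemma sum_lt_mono (f : nat -> R) n m :
  (forall i, 0 <= f i) -> (n <= m)%nat -> sum_lt f n <= sum_lt f m.
Proof.
  intros H Hnm; induction Hnm; [apply Rle_refl|]. simpl. specialize (H m); lra.
Qed.

Lemma sum_lt_zero (f : nat -> R) n :
  (forall i, (i < n)%nat -> f i = 0) -> sum_lt f n = 0.
Proof.
  intros H. rewrite (sum_lt_ext f (fun _ => 0)) by auto.
  clear H. induction n; simpl; [lra|]. rewrite IHn; lra.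
Qed.

Lemma sum_lt_term_le (f : nat -> R) n m :
  (forall i, 0 <= f i) -> (m < n)%nat -> f m <= sum_lt f n.
Proof.
  intros H Hm.
  eapply Rle_trans; [|apply (sum_lt_mono f (S m) n H); lia]. simpl.
  pose proof (sum_lt_nonneg f m H). lra.
Qed.

Lemma sum_lt_ind1 (k : nat) (a : R) M :
  (k < M)%nat -> sum_lt (fun m => if Nat.eqb m k then a else 0) M = a.
Proof.
  induction M as [|M IH]; intros H; [lia|]. simpl.
  destruct (Nat.eqb_spec M k).
  - subst. rewrite sum_lt_zero; [lra|]. intros i Hi.
    destruct (Nat.eqb_spec i k); [lia|auto].
  - rewrite IH by lia. lra.
Qed.

Lemma reindex (f : nat -> R) (P : nat -> bool) (phi : nat -> nat) n M :
  (forall m, 0 <= f m) ->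
  (forall i j, (i < n)%nat -> (j < n)%nat -> P i = true -> P j = true ->
     phi i = phi j -> i = j) ->
  (forall i, (i < n)%nat -> P i = true -> (phi i < M)%nat) ->
  sum_lt (fun i => if P i then f (phi i) else 0) n <= sum_lt f M.
Proof.
  intros Hf.
  set (g := fun n m => if existsb (fun i => P i && Nat.eqb (phi i) m) (seq 0 n)
                       then f m else 0).
  assert (Hstep : forall n, 
    (forall i j, (i < n)%nat -> (j < n)%nat -> P i = true -> P j = true ->
     phi i = phi j -> i = j) ->
    (forall i, (i < n)%nat -> P i = true -> (phi i < M)%nat) ->
    sum_lt (fun i => if P i then f (phi i) else 0) n = sum_lt (g n) M).
  { clear n. induction n as [|n IH]; intros Hinj Hb.
    - simpl. rewrite sum_lt_zero; auto.
    - simpl. rewrite IH by (intros; first [apply Hinj; auto; lia | apply Hb; auto; lia]).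
      destruct (P n) eqn:EP.
      + rewrite <- (sum_lt_ind1 (phi n) (f (phi n)) M) by (apply Hb; auto).
        rewrite <- sum_lt_plus. apply sum_lt_ext. intros m Hm.
        unfold g. rewrite seq_S, existsb_app. simpl.
        rewrite EP. simpl. rewrite orb_false_r.
        destruct (Nat.eqb_spec m (phi n)).
        * subst m. rewrite Nat.eqb_refl.
          destruct (existsb _ (seq 0 n)) eqn:E; [|simpl; lra].
          apply existsb_exists in E. destruct E as [i [Hi Hi2]].
          apply in_seq in Hi. apply andb_prop in Hi2. destruct Hi2 as [H1 H2].
          apply Nat.eqb_eq in H2. assert (i = n) by (apply Hinj; auto; lia). lia.
        * replace (Nat.eqb (phi n) m) with false by (symmetry; apply Nat.eqb_neq; auto).
          rewrite orb_false_r. lra.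
      + rewrite Rplus_0_r. apply sum_lt_ext. intros m Hm.
        unfold g. rewrite seq_S, existsb_app. simpl. rewrite EP. simpl.
        rewrite orb_false_r. auto. }
  intros Hinj Hb. rewrite Hstep by auto. apply sum_lt_le. intros m _.
  unfold g. destruct existsb; [lra|apply Hf].
Qed.

Lemma at_most_one (P : nat -> bool) (a : R) n :
  0 <= a ->
  (forall i j, (i < n)%nat -> (j < n)%nat -> P i = true -> P j = true -> i = j) ->
  sum_lt (fun i => if P i then a else 0) n <= a.
Proof.
  intros Ha H.
  pose proof (reindex (fun m => if Nat.eqb m 0 then a else 0) P (fun _ => 0%nat) n 1).
  simpl in H0. 
  assert (E : sum_lt (fun i => if P i then a else 0) n = 
              sum_lt (fun i => if P i then (if Nat.eqb 0 0 then a else 0) else 0) n) by auto.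
  rewrite E. eapply Rle_trans; [apply H0|].
  - intros m; destruct (Nat.eqb m 0); lra.
  - intros; apply H; auto.
  - intros; lia.
  - simpl. lra.
Qed.

Lemma exists_bound (phi : nat -> nat) n : exists B, forall i, (i < n)%nat -> (phi i < B)%nat.
Proof.
  induction n as [|n [B HB]]; [exists 0%nat; intros; lia|].
  exists (Nat.max B (S (phi n))). intros i Hi.
  destruct (Nat.eq_dec i n); [subst; lia|]. specialize (HB i ltac:(lia)). lia.
Qed.

Definition Su (u : seqR) (k : nat) : R := sum_lt u k.

Lemma sum_n_m_Su (u : seqR) lo h :
  (lo <= h)%nat -> sum_n_m u lo h = Su u (S h) - Su u lo.
Proof.
  intros H. induction H.
  - rewrite sum_n_n. unfold Su; simpl. lra.
  - rewrite sum_n_Sm by lia. rewrite IHle. unfold Su; simpl.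
    change plus with Rplus. lra.
Qed.

Lemma sum_n_shift (u : seqR) lo m :
  sum_n (fun k => u (lo + k)%nat) m = Su u (lo + S m) - Su u lo.
Proof.
  induction m.
  - unfold sum_n. rewrite sum_n_n. unfold Su. replace (lo + 1)%nat with (S lo) by lia.
    simpl. rewrite Nat.add_0_r. lra.
  - unfold sum_n in *. rewrite sum_n_Sm by lia. rewrite IHm.
    change plus with Rplus. unfold Su. replace (lo + S (S m))%nat with (S (lo + S m)) by lia.
    simpl. lra.
Qed.

Definition Iend (u : seqR) (L : R) (I : interval) : R :=
  match hi I with Some h => Su u (S h) | None => L end.

Lemma lim_shift (u : seqR) (L : R) lo :
  is_lim_seq (Su u) L ->
  is_lim_seq (fun m => Su u (lo + S m) - Su u lo) (L - Su u lo).
Proof.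
  intros HL. apply is_lim_seq_minus'; [|apply is_lim_seq_const].
  apply (is_lim_seq_incr_n _ (S lo)) in HL.
  eapply is_lim_seq_ext; [|apply HL]. intros n. replace (lo + S n)%nat with (n + S lo)%nat by lia. reflexivity.
Qed.

Lemma isum_iff (u : seqR) (L : R) I s :
  is_lim_seq (Su u) L -> wf_interval I ->
  (interval_sum u I s <-> s = Iend u L I - Su u (lo I)).
Proof.
  intros HL Hwf. unfold interval_sum, Iend, wf_interval in *.
  destruct (hi I) as [h|].
  - rewrite sum_n_m_Su by auto. tauto.
  - split.
    + intros Hs. 
      assert (H1 : is_lim_seq (sum_n (fun k => u (lo I + k)%nat)) s) by exact Hs.
      assert (H2 : is_lim_seq (sum_n (fun k => u (lo I + k)%nat)) (L - Su u (lo I))).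
      { eapply is_lim_seq_ext; [|apply lim_shift; eauto]. intros; rewrite sum_n_shift; auto. }
      apply is_lim_seq_unique in H1. apply is_lim_seq_unique in H2.
      rewrite H1 in H2. injection H2; auto.
    + intros ->. 
      assert (H2 : is_lim_seq (sum_n (fun k => u (lo I + k)%nat)) (L - Su u (lo I))).
      { eapply is_lim_seq_ext; [|apply lim_shift; eauto]. intros; rewrite sum_n_shift; auto. }
      exact H2.
Qed.

Lemma lim_const_after (u : seqR) (L : R) a :
  is_lim_seq (Su u) L -> (forall j, (a <= j)%nat -> u j = 0) -> L = Su u a.
Proof.
  intros HL H.
  assert (E : forall k, (a <= k)%nat -> Su u k = Su u a).
  { intros k Hk; induction Hk; auto. unfold Su in *; simpl. rewrite IHHk. rewrite (H m) by lia. lra. }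
  assert (H2 : is_lim_seq (Su u) (Su u a)).
  { eapply is_lim_seq_ext_loc; [|apply is_lim_seq_const]. exists a. intros n Hn; rewrite (E n); auto. }
  apply is_lim_seq_unique in HL. apply is_lim_seq_unique in H2. rewrite HL in H2.
  injection H2; auto.
Qed.

Lemma Su_const (u : seqR) a b :
  (a <= b)%nat -> (forall j, (a <= j < b)%nat -> u j = 0) -> Su u b = Su u a.
Proof.
  intros Hab H; induction Hab; auto. unfold Su in *; simpl.
  rewrite IHHab by (intros; apply H; lia). rewrite H by lia. lra.
Qed.

Lemma sum_lt_S (f : nat -> R) n : sum_lt f (S n) = sum_lt f n + f n.
Proof. reflexivity. Qed.


Lemma least_ex (c : nat -> bool) n :
  (exists m, (n < m)%nat /\ c m = true) ->
  exists m, (n < m)%nat /\ c m = true /\ forall k, (n < k < m)%nat -> c k = false.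
Proof.
  intros [m0 Hm0].
  induction m0 as [m0 IH] using (well_founded_induction Wf_nat.lt_wf).
  destruct (classic (exists k, (n < k < m0)%nat /\ c k = true)) as [[k Hk]|Hn].
  - apply (IH k); [lia|]. split; [lia|tauto].
  - exists m0. split; [tauto|split; [tauto|]]. intros k Hk.
    destruct (c k) eqn:E; auto. exfalso; apply Hn; exists k; auto.
Qed.

Definition nextc (c : nat -> bool) (n : nat) : option nat :=
  match excluded_middle_informative (exists m, (n < m)%nat /\ c m = true) with
  | left H => Some (proj1_sig (constructive_indefinite_description _ (least_ex c n H)))
  | right _ => None
  end.

Lemma nextc_Some c n m : nextc c n = Some m ->
  (n < m)%nat /\ c m = true /\ forall k, (n < k < m)%nat -> c k = false.
Proof.
  unfold nextc. destruct excluded_middle_informative; [|discriminate].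
  intros E; injection E; intros <-.
  destruct constructive_indefinite_description; simpl; auto.
Qed.

Lemma nextc_None c n : nextc c n = None -> forall k, (n < k)%nat -> c k = false.
Proof.
  unfold nextc. destruct excluded_middle_informative as [|Hn]; [discriminate|].
  intros _ k Hk. destruct (c k) eqn:E; auto. exfalso; apply Hn; exists k; auto.
Qed.

Lemma nextc_char_Some c n m : (n < m)%nat -> c m = true ->
  (forall k, (n < k < m)%nat -> c k = false) -> nextc c n = Some m.
Proof.
  intros H1 H2 H3. destruct (nextc c n) as [m'|] eqn:E.
  - apply nextc_Some in E. destruct E as [E1 [E2 E3]]. f_equal.
    destruct (Nat.lt_total m m') as [Hl|[Hl|Hl]]; auto.
    + rewrite E3 in H2 by lia. discriminate.
    + rewrite H3 in E2 by lia. discriminate.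
  - apply nextc_None with (k := m) in E; auto. congruence.
Qed.

Lemma nextc_char_None c n : (forall k, (n < k)%nat -> c k = false) -> nextc c n = None.
Proof.
  intros H. destruct (nextc c n) as [m'|] eqn:E; auto.
  apply nextc_Some in E. destruct E as [E1 [E2 E3]]. rewrite H in E2 by lia. discriminate.
Qed.

Lemma nextc_ext c c' n : (forall k, (n < k)%nat -> c k = c' k) -> nextc c n = nextc c' n.
Proof.
  intros H. destruct (nextc c n) as [m|] eqn:E.
  - apply nextc_Some in E. destruct E as [E1 [E2 E3]]. symmetry.
    apply nextc_char_Some; auto. rewrite <- H by lia; auto.
    intros k Hk. rewrite <- H by lia. apply E3; lia.
  - symmetry. apply nextc_char_None. intros k Hk. rewrite <- H by lia.
    apply (nextc_None c n E); auto.
Qed.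

Lemma nextc_ext_Some c c' n m : nextc c n = Some m ->
  (forall k, (n < k <= m)%nat -> c k = c' k) -> nextc c' n = Some m.
Proof.
  intros E H. apply nextc_Some in E. destruct E as [E1 [E2 E3]].
  apply nextc_char_Some; auto. rewrite <- H by lia; auto.
  intros k Hk. rewrite <- H by lia. apply E3; lia.
Qed.

Definition st (c : nat -> bool) (n : nat) : bool := Nat.eqb n 0 || c n.

Definition Endc (x : seqR) (L : R) (c : nat -> bool) (n : nat) : R :=
  match nextc c n with Some m => Su x m | None => L end.

Definition term (x : seqR) (L : R) (c : nat -> bool) (n : nat) : R :=
  if st c n then (Endc x L c n - Su x n)^2 else 0.

Definition Vs (x : seqR) (L : R) (c : nat -> bool) (M : nat) : R :=
  sum_lt (term x L c) M.

Lemma term_nonneg x L c n : 0 <= term x L c n.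
Proof. unfold term. destruct st; [apply pow2_ge_0|lra]. Qed.

Lemma Vs_mono x L c M M' : (M <= M')%nat -> Vs x L c M <= Vs x L c M'.
Proof. intros; apply sum_lt_mono; auto using term_nonneg. Qed.

Definition cell (c : nat -> bool) (n : nat) : interval :=
  mkInterval n (match nextc c n with Some m => Some (pred m) | None => None end).

Lemma cell_wf c n : wf_interval (cell c n).
Proof.
  unfold wf_interval, cell; simpl. destruct (nextc c n) eqn:E; auto.
  apply nextc_Some in E; lia.
Qed.

Lemma cell_Iend x L c n : Iend x L (cell c n) = Endc x L c n.
Proof.
  unfold Iend, cell, Endc; cbn [hi lo]. destruct (nextc c n) as [m|] eqn:E; auto.
  apply nextc_Some in E. replace (S (pred m)) with m by lia. auto.
Qed.

Definition cutsI (n : nat) (I : nat -> interval) (m : nat) : bool :=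
  existsb (fun i => Nat.eqb (lo (I i)) m ||
             match hi (I i) with Some h => Nat.eqb (S h) m | None => false end) (seq 0 n).

Lemma cutsI_spec n I m : cutsI n I m = true <->
  exists i, (i < n)%nat /\ (lo (I i) = m \/ hi (I i) = Some (pred m) /\ (0 < m)%nat).
Proof.
  unfold cutsI. rewrite existsb_exists. split.
  - intros [i [Hi H]]. apply in_seq in Hi. exists i. split; [lia|].
    apply orb_prop in H. destruct H as [H|H].
    + left. apply Nat.eqb_eq; auto.
    + right. destruct (hi (I i)); [|discriminate]. apply Nat.eqb_eq in H. subst. 
      split; [auto|lia].
  - intros [i [Hi H]]. exists i. split; [apply in_seq; lia|].
    destruct H as [H|[H1 H2]].
    + rewrite H, Nat.eqb_refl; auto.
    + rewrite H1. apply orb_true_intro; right. apply Nat.eqb_eq. lia.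
Qed.

Section WithX.
Variable x : seqR.
Variable J : R.
Hypothesis HJ : Jnorm x = Finite J.
Variable L : R.
Hypothesis HL : is_lim_seq (Su x) L.

Lemma Jv_le v : Jvalues x v -> v <= J.
Proof.
  intros H. pose proof (Lub_Rbar_correct (Jvalues x)) as [Hub _].
  specialize (Hub v H). unfold Jnorm in HJ. rewrite HJ in Hub. exact Hub.
Qed.

Lemma J_nonneg : 0 <= J.
Proof.
  apply Jv_le. exists 0%nat, (fun _ => mkInterval 0 None), (fun _ => 0).
  split; [intros; lia|split; [intros; lia|split; [intros; lia|]]].
  simpl. rewrite sqrt_0; auto.
Qed.

Lemma sqrt_le_sq a : 0 <= a -> sqrt a <= J -> a <= J^2.
Proof.
  intros Ha H. pose proof J_nonneg. rewrite <- (sqrt_sqrt a Ha).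
  pose proof (sqrt_pos a). simpl. nra.
Qed.

Lemma pack (n : nat) (I : nat -> interval) (s : nat -> R) (P : nat -> bool) :
  (forall i, (i < n)%nat -> P i = true -> wf_interval (I i) /\ interval_sum x (I i) (s i)) ->
  (forall i j, (i < n)%nat -> (j < n)%nat -> P i = true -> P j = true -> i <> j ->
     forall m, ~ (in_interval m (I i) /\ in_interval m (I j))) ->
  sum_lt (fun i => if P i then (s i)^2 else 0) n <= J^2.
Proof.
  intros H1 H2.
  assert (Hp : exists k g, (forall j, (j < k)%nat -> (g j < n)%nat /\ P (g j) = true) /\
     (forall j j', (j < j' < k)%nat -> (g j < g j')%nat) /\
     sum_lt (fun j => (s (g j))^2) k = sum_lt (fun i => if P i then (s i)^2 else 0) n).
  { clear H1 H2. induction n as [|n [k [g [G1 [G2 G3]]]]].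
    - exists 0%nat, (fun j => j). split; [intros; lia|split; [intros; lia|auto]].
    - destruct (P n) eqn:EP.
      + exists (S k), (fun j => if Nat.eqb j k then n else g j). split; [|split].
        * intros j Hj. destruct (Nat.eqb_spec j k); [split; [lia|auto]|]. 
          specialize (G1 j ltac:(lia)). split; [lia|tauto].
        * intros j j' Hj. destruct (Nat.eqb_spec j k); [lia|].
          specialize (G1 j ltac:(lia)).
          destruct (Nat.eqb_spec j' k); [lia|]. apply G2; lia.
        * rewrite !sum_lt_S. rewrite EP, Nat.eqb_refl, <- G3. f_equal.
          apply sum_lt_ext. intros j Hj. destruct (Nat.eqb_spec j k); [lia|auto].
      + exists k, g. split; [|split]; auto.
        * intros j Hj. specialize (G1 j Hj). split; [lia|tauto].
        * rewrite sum_lt_S, EP, G3. lra. }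
  destruct Hp as [k [g [G1 [G2 G3]]]]. rewrite <- G3.
  apply sqrt_le_sq; [apply sum_lt_nonneg; intros; apply pow2_ge_0|].
  apply Jv_le. exists k, (fun j => I (g j)), (fun j => s (g j)).
  split; [|split; [|split]]; auto.
  - intros j Hj. apply H1; apply G1; auto.
  - intros j j' Hj Hj' Hne. apply H2; try apply G1; auto.
    destruct (Nat.lt_total j j') as [Hl|[Hl|Hl]]; [|lia|].
    + specialize (G2 j j' ltac:(lia)); lia.
    + specialize (G2 j' j ltac:(lia)); lia.
  - intros j Hj. apply H1; apply G1; auto.
Qed.

Lemma fam_le n I s :
  (forall i, (i < n)%nat -> wf_interval (I i)) ->
  (forall i j, (i < n)%nat -> (j < n)%nat -> i <> j ->
     forall m, ~ (in_interval m (I i) /\ in_interval m (I j))) ->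
  (forall i, (i < n)%nat -> interval_sum x (I i) (s i)) ->
  sum_lt (fun i => (s i)^2) n <= J^2.
Proof.
  intros H1 H2 H3. pose proof (pack n I s (fun _ => true)) as Hp. simpl in Hp.
  apply Hp; auto.
Qed.

Lemma single_le I s : wf_interval I -> interval_sum x I s -> Rabs s <= J.
Proof.
  intros H1 H2. pose proof (fam_le 1 (fun _ => I) (fun _ => s)) as H.
  simpl in H. assert (0 + s^2 <= J^2) by (apply H; intros; auto; lia).
  pose proof J_nonneg. apply Rsqr_le_abs_1 in H0 || idtac.
  apply Rabs_le. split; nra.
Qed.

Lemma Vs_le c M : Vs x L c M <= J^2.
Proof.
  unfold Vs, term.
  apply (pack M (cell c) (fun n => Endc x L c n - Su x n) (st c)).
  - intros i _ _. split; [apply cell_wf|]. 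
    apply (proj2 (isum_iff x L (cell c i) _ HL (cell_wf c i))).
    rewrite cell_Iend. auto.
  - intros i j _ _ Hi Hj Hne m [[A1 A2] [B1 B2]]. unfold cell in *; simpl in *.
    assert (Hc : forall a b, (a < b)%nat -> st c b = true -> 
      match nextc c a with Some k => (k <= b)%nat | None => False end).
    { intros a b Hab Hb. unfold st in Hb. apply orb_prop in Hb.
      destruct Hb as [Hb|Hb]; [apply Nat.eqb_eq in Hb; lia|].
      destruct (nextc c a) eqn:E.
      - apply nextc_Some in E. destruct E as [E1 [E2 E3]].
        destruct (Nat.le_gt_cases n b); auto. rewrite E3 in Hb by lia. discriminate.
      - rewrite (nextc_None c a E b) in Hb; [discriminate|lia]. }
    destruct (Nat.lt_total i j) as [Hl|[Hl|Hl]]; [|lia|].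
    + specialize (Hc i j Hl Hj). destruct (nextc c i); [lia|auto].
    + specialize (Hc j i Hl Hi). destruct (nextc c j); [lia|auto].
Qed.

Lemma term_le c n : Rabs (Endc x L c n - Su x n) <= J \/ st c n = false.
Proof.
  destruct (st c n) eqn:E; [left|right; auto].
  pose proof (Vs_le c (S n)). unfold Vs in H. simpl in H.
  pose proof (sum_lt_nonneg (term x L c) n (term_nonneg x L c)).
  unfold term at 2 in H. rewrite E in H. pose proof J_nonneg.
  apply Rabs_le. split; nra.
Qed.

Lemma fam_to_cuts n I s :
  (forall i, (i < n)%nat -> wf_interval (I i)) ->
  (forall i j, (i < n)%nat -> (j < n)%nat -> i <> j ->
     forall m, ~ (in_interval m (I i) /\ in_interval m (I j))) ->
  (forall i, (i < n)%nat -> interval_sum x (I i) (s i)) ->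
  exists M, sum_lt (fun i => (s i)^2) n <= Vs x L (cutsI n I) M.
Proof.
  intros H1 H2 H3.
  set (c := cutsI n I).
  assert (Hin : forall i, (i < n)%nat -> in_interval (lo (I i)) (I i)).
  { intros i Hi. specialize (H1 i Hi). unfold wf_interval, in_interval in *.
    destruct (hi (I i)); split; auto. }
  assert (Hnext : forall i, (i < n)%nat ->
     nextc c (lo (I i)) = match hi (I i) with Some h => Some (S h) | None => None end).
  { intros i Hi. 
    assert (Hno : forall k, (lo (I i) < k)%nat ->
       match hi (I i) with Some h => (k <= h)%nat | None => True end -> c k = false).
    { intros k Hk1 Hk2. destruct (c k) eqn:E; auto. exfalso.
      apply cutsI_spec in E. destruct E as [j [Hj [E|[E E']]]].
      - assert (i <> j) by (intro; subst; lia).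
        apply (H2 i j Hi Hj H k). split; [split; [lia|auto]|]. rewrite <- E. apply Hin; auto.
      - assert (i <> j).
        { intro; subst. rewrite E in Hk2. lia. }
        apply (H2 i j Hi Hj H (pred k)). split.
        + split. 
          * destruct (Nat.eq_dec (lo (I i)) (pred k)); [lia|].
            assert (lo (I i) <= pred k)%nat; [|lia].
            destruct (Nat.le_gt_cases (lo (I i)) (pred k)); auto.
            lia.
          * destruct (hi (I i)); auto. lia.
        + specialize (H1 j Hj). unfold wf_interval in H1. rewrite E in H1.
          split; [auto|]. rewrite E. auto. }
    specialize (H1 i Hi). unfold wf_interval in H1.
    destruct (hi (I i)) as [h|] eqn:Eh.
    - apply nextc_char_Some; [lia| |].
      + apply cutsI_spec. exists i. split; auto. right. rewrite Eh. split; [f_equal|lia].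
      + intros k Hk. apply Hno; [lia|]. lia.
    - apply nextc_char_None. intros k Hk. apply Hno; auto. }
  assert (Hterm : forall i, (i < n)%nat -> term x L c (lo (I i)) = (s i)^2).
  { intros i Hi. unfold term.
    replace (st c (lo (I i))) with true.
    2:{ symmetry. unfold st. apply orb_true_intro; right. apply cutsI_spec.
        exists i; auto. }
    unfold Endc. rewrite Hnext by auto.
    specialize (H3 i Hi). apply (isum_iff x L _ _ HL (H1 i Hi)) in H3. rewrite H3. unfold Iend.
    destruct (hi (I i)); auto. }
  destruct (exists_bound (fun i => lo (I i)) n) as [B HB].
  exists B.
  pose proof (reindex (term x L c) (fun _ => true) (fun i => lo (I i)) n B) as HR.
  cbv beta in HR.
  rewrite (sum_lt_ext _ (fun i => term x L c (lo (I i))))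
    by (intros; rewrite Hterm; auto).
  unfold Vs. apply HR; auto using term_nonneg.
  intros i j Hi Hj _ _ E. destruct (Nat.eq_dec i j); auto. exfalso.
  apply (H2 i j Hi Hj n0 (lo (I i))). split; [apply Hin; auto|]. rewrite E; apply Hin; auto.
Qed.

End WithX.


Lemma conv (x : seqR) (J : R) : Jnorm x = Finite J -> exists L : R, is_lim_seq (Su x) L.
Proof.
  intros HJ.
  destruct (classic (Cauchy_crit (Su x))) as [HC|HnC].
  - destruct (Rcomplete.R_complete _ HC) as [l Hl]. exists l. apply is_lim_seq_Reals; auto.
  - exfalso. unfold Cauchy_crit in HnC.
    apply not_all_ex_not in HnC. destruct HnC as [eps Heps].
    apply imply_to_and in Heps. destruct Heps as [Heps HN].
    assert (Hbad : forall N, exists n m, (N <= n < m)%nat /\ eps <= Rabs (Su x m - Su x n)).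
    { intros N. destruct (classic (exists n m, (N <= n < m)%nat /\ eps <= Rabs (Su x m - Su x n)))
        as [H|H]; auto. exfalso. apply HN. exists N. intros n m Hn Hm.
      unfold Rdist. destruct (Nat.lt_total n m) as [Hl|[Hl|Hl]].
      - apply Rnot_le_lt. intro Hc. apply H. exists n, m. split; [lia|].
        rewrite Rabs_minus_sym. auto.
      - subst. unfold Rminus. rewrite Rplus_opp_r, Rabs_R0. lra.
      - apply Rnot_le_lt. intro Hc. apply H. exists m, n. split; [lia|]. auto. }
    assert (Hfam : forall K, exists (I : nat -> interval) (s : nat -> R) (B : nat),
      (forall i, (i < K)%nat -> exists h, hi (I i) = Some h /\ (lo (I i) <= h < B)%nat) /\
      (forall i j, (i < j < K)%nat -> exists h, hi (I i) = Some h /\ (h < lo (I j))%nat) /\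
      (forall i, (i < K)%nat -> interval_sum x (I i) (s i)) /\
      INR K * eps^2 <= sum_lt (fun i => (s i)^2) K).
    { induction K as [|K [I [s [B [F1 [F2 [F3 F4]]]]]]].
      - exists (fun _ => mkInterval 0 None), (fun _ => 0), 0%nat.
        split; [intros; lia|split; [intros; lia|split; [intros; lia|]]]. simpl. lra.
      - destruct (Hbad B) as [n [m [Hnm He]]].
        exists (fun i => if Nat.eqb i K then mkInterval n (Some (pred m)) else I i),
               (fun i => if Nat.eqb i K then Su x m - Su x n else s i), m.
        split; [|split; [|split]].
        + intros i Hi. destruct (Nat.eqb_spec i K).
          * exists (pred m). simpl. split; auto; lia.
          * destruct (F1 i ltac:(lia)) as [h [Eh Hh]]. exists h; split; auto; lia.
        + intros i j Hij. destruct (Nat.eqb_spec i K); [lia|].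
          destruct (Nat.eqb_spec j K).
          * destruct (F1 i ltac:(lia)) as [h [Eh Hh]]. exists h; split; auto. simpl; lia.
          * apply F2; lia.
        + intros i Hi. destruct (Nat.eqb_spec i K).
          * unfold interval_sum; simpl. rewrite sum_n_m_Su by lia.
            replace (S (pred m)) with m by lia. auto.
          * apply F3; lia.
        + rewrite sum_lt_S, Nat.eqb_refl, S_INR.
          rewrite (sum_lt_ext _ (fun i => (s i)^2)).
          2:{ intros i Hi. destruct (Nat.eqb_spec i K); [exfalso; lia|auto]. }
          assert (eps^2 <= (Su x m - Su x n)^2).
          { replace ((Su x m - Su x n)^2) with (Rabs (Su x m - Su x n)^2) by apply pow2_abs.
            apply pow_incr; lra. }
          lra. }
    assert (Hle : forall K, INR K * eps^2 <= J^2).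
    { intros K. destruct (Hfam K) as [I [s [B [F1 [F2 [F3 F4]]]]]].
      eapply Rle_trans; [apply F4|]. apply (fam_le x J HJ K I s); auto.
      - intros i Hi. destruct (F1 i Hi) as [h [Eh Hh]]. unfold wf_interval. rewrite Eh. lia.
      - intros i j Hi Hj Hne m [[A1 A2] [B1 B2]].
        destruct (Nat.lt_total i j) as [Hl|[Hl|Hl]]; [|lia|].
        + destruct (F2 i j ltac:(lia)) as [h [Eh Hh]]. rewrite Eh in A2. lia.
        + destruct (F2 j i ltac:(lia)) as [h [Eh Hh]]. rewrite Eh in B2. lia. }
    assert (He2 : 0 < eps^2) by nra.
    assert (Hq : 0 <= J^2 / eps^2).
    { apply Rmult_le_pos; [apply pow2_ge_0|]. left; apply Rinv_0_lt_compat; auto. }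
    destruct (nfloor_ex _ Hq) as [K [_ HK]].
    specialize (Hle (S K)). rewrite S_INR in Hle.
    assert (J^2 < (INR K + 1) * eps^2); [|lra].
    apply Rmult_lt_reg_r with (/ eps^2); [apply Rinv_0_lt_compat; auto|].
    rewrite Rmult_assoc, Rinv_r by lra. unfold Rdiv in HK. lra.
Qed.


Definition inb (m : nat) (I : interval) : bool :=
  Nat.leb (lo I) m && match hi I with Some h => Nat.leb m h | None => true end.

Lemma inb_spec m I : inb m I = true <-> in_interval m I.
Proof.
  unfold inb, in_interval. rewrite andb_true_iff, Nat.leb_le.
  destruct (hi I); [rewrite Nat.leb_le|]; tauto.
Qed.

Definition sepc (n1 n2 : nat) (c : nat -> bool) : Prop :=
  exists m, (n1 < m <= n2)%nat /\ c m = true.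

Definition b2r (b : bool) : R := if b then 1 else 0.

Definition dpert (n1 n2 : nat) (k : nat) : R :=
  b2r (Nat.eqb k n1) - b2r (Nat.eqb k n2).

Definition Dp (n1 n2 : nat) (k : nat) : R :=
  b2r (Nat.ltb n1 k) - b2r (Nat.ltb n2 k).

Lemma Su_pert x e n1 n2 k :
  Su (fun j => x j + e * dpert n1 n2 j) k = Su x k + e * Dp n1 n2 k.
Proof.
  induction k.
  - unfold Su, Dp, b2r; simpl. lra.
  - unfold Su in *. rewrite !sum_lt_S, IHk. unfold Dp, dpert, b2r.
    destruct (Nat.ltb_spec n1 k), (Nat.ltb_spec n1 (S k)), (Nat.eqb_spec k n1);
    destruct (Nat.ltb_spec n2 k), (Nat.ltb_spec n2 (S k)), (Nat.eqb_spec k n2);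
    try lia; lra.
Qed.

Section Pert.
Variable x : seqR.
Variable J : R.
Hypothesis HJ : Jnorm x = Finite J.
Hypothesis HJ1 : J <= 1.
Variable L : R.
Hypothesis HL : is_lim_seq (Su x) L.
Variables n1 n2 : nat.
Hypothesis Hn12 : (n1 < n2)%nat.

Lemma Iend_pert e I : wf_interval I ->
  let y := fun j => x j + e * dpert n1 n2 j in
  Iend y L I - Su y (lo I) =
  Iend x L I - Su x (lo I) + e * (b2r (inb n1 I) - b2r (inb n2 I)).
Proof.
  intros Hw y. unfold y, Iend, inb.
  unfold wf_interval in Hw.
  destruct (hi I) as [h|]; rewrite !Su_pert; unfold Dp, b2r.
  - destruct (Nat.ltb_spec n1 (S h)), (Nat.ltb_spec n2 (S h)),
      (Nat.ltb_spec n1 (lo I)), (Nat.ltb_spec n2 (lo I)),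
      (Nat.leb_spec (lo I) n1), (Nat.leb_spec (lo I) n2),
      (Nat.leb_spec n1 h), (Nat.leb_spec n2 h); cbn [andb]; try lia; lra.
  - destruct (Nat.ltb_spec n1 (lo I)), (Nat.ltb_spec n2 (lo I)),
      (Nat.leb_spec (lo I) n1), (Nat.leb_spec (lo I) n2); cbn [andb]; try lia; lra.
Qed.

Variable eta : R.
Hypothesis Heta : 0 < eta.
Hypothesis Hsep : forall c M, sepc n1 n2 c -> Vs x L c M <= J^2 - eta.

Lemma BJ_pert e : Rabs e <= Rmin 1 (eta / 6) -> BJ (fun j => x j + e * dpert n1 n2 j).
Proof.
  intros He. set (y := fun j => x j + e * dpert n1 n2 j).
  set (eps := Rmin 1 (eta / 6)).
  assert (Heps1 : eps <= 1) by apply Rmin_l.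
  assert (Heps2 : eps <= eta / 6) by apply Rmin_r.
  pose proof (J_nonneg x J HJ) as HJ0.
  assert (HLy : is_lim_seq (Su y) L).
  { eapply is_lim_seq_ext_loc; [|apply HL]. exists (S n2). intros k Hk.
    unfold y. rewrite Su_pert. unfold Dp, b2r.
    destruct (Nat.ltb_spec n1 k), (Nat.ltb_spec n2 k); try lia. lra. }
  unfold BJ. pose proof (Lub_Rbar_correct (Jvalues y)) as [_ Hlub].
  unfold Jnorm. apply Hlub. intros v [n [I [s [H1 [H2 [H3 Hv]]]]]].
  simpl. subst v.
  set (sx := fun i => Iend x L (I i) - Su x (lo (I i))).
  assert (Hs : forall i, (i < n)%nat ->
     s i = sx i + e * (b2r (inb n1 (I i)) - b2r (inb n2 (I i)))).
  { intros i Hi. specialize (H3 i Hi). apply (isum_iff y L _ _ HLy (H1 i Hi)) in H3.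
    rewrite H3. unfold sx. apply Iend_pert; auto. }
  assert (Hsx : forall i, (i < n)%nat -> interval_sum x (I i) (sx i)).
  { intros i Hi. apply (isum_iff x L _ _ HL (H1 i Hi)). auto. }
  assert (Habs : forall i, (i < n)%nat -> Rabs (sx i) <= J).
  { intros i Hi. apply (single_le x J HJ (I i)); auto. }
  rewrite <- sqrt_1. apply sqrt_le_1_alt.
  destruct (classic (exists i, (i < n)%nat /\ inb n1 (I i) <> inb n2 (I i))) as [[i0 [Hi0 Hne]]|Hno].
  -
    assert (Hsp : sepc n1 n2 (cutsI n I)).
    { pose proof (H1 i0 Hi0) as Hw. unfold wf_interval in Hw.
      destruct (inb n1 (I i0)) eqn:E1, (inb n2 (I i0)) eqn:E2; try congruence.
      - apply inb_spec in E1. destruct E1 as [A1 A2].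
        destruct (hi (I i0)) as [h|] eqn:Eh.
        + assert (h < n2)%nat.
          { destruct (Nat.le_gt_cases n2 h); auto. exfalso.
            assert (inb n2 (I i0) = true); [|congruence]. apply inb_spec.
            split; [lia|rewrite Eh; auto]. }
          exists (S h). split; [lia|]. apply cutsI_spec. exists i0. split; auto.
          right. split; [rewrite Eh; auto|lia].
        + exfalso. assert (inb n2 (I i0) = true); [|congruence]. apply inb_spec.
          split; [lia|rewrite Eh; auto].
      - apply inb_spec in E2. destruct E2 as [A1 A2].
        exists (lo (I i0)). split.
        + split; auto. destruct (Nat.le_gt_cases (lo (I i0)) n1); auto. exfalso.
          assert (inb n1 (I i0) = true); [|congruence]. apply inb_spec.
          split; auto. destruct (hi (I i0)); auto. lia.
        + apply cutsI_spec. exists i0. auto. }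
    destruct (fam_to_cuts x L HL n I sx H1 H2 Hsx) as [M HM].
    specialize (Hsep _ M Hsp).
    set (K := 2 * J * eps + eps^2).
    assert (Hpt : forall i, (i < n)%nat ->
       (s i)^2 <= (sx i)^2 + (K * b2r (inb n1 (I i)) + K * b2r (inb n2 (I i)))).
    { intros i Hi. rewrite Hs by auto. specialize (Habs i Hi).
      assert (Hse : sx i * e <= J * eps).
      { eapply Rle_trans; [apply Rle_abs|]. rewrite Rabs_mult.
        apply Rmult_le_compat; auto using Rabs_pos. }
      assert (Hse' : - (sx i * e) <= J * eps).
      { eapply Rle_trans; [apply Rle_abs|]. rewrite Rabs_Ropp, Rabs_mult.
        apply Rmult_le_compat; auto using Rabs_pos. }
      assert (He2 : e^2 <= eps^2).
      { rewrite <- pow2_abs. apply pow_incr. split; auto using Rabs_pos. }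
      unfold K, b2r. destruct (inb n1 (I i)), (inb n2 (I i)); nra. }
    assert (Hat : forall m, sum_lt (fun i => b2r (inb m (I i))) n <= 1).
    { intros m. unfold b2r. apply at_most_one; [lra|].
      intros i j Hi Hj Ei Ej. destruct (Nat.eq_dec i j); auto. exfalso.
      apply inb_spec in Ei. apply inb_spec in Ej. apply (H2 i j Hi Hj n0 m). auto. }
    eapply Rle_trans; [apply sum_lt_le; apply Hpt|].
    rewrite sum_lt_plus, sum_lt_plus, sum_lt_scal, sum_lt_scal.
    pose proof (Hat n1). pose proof (Hat n2).
    assert (HK : 0 <= K) by (unfold K; pose proof (Rmin_glb_lt 0 1 (eta/6)); 
      assert (0 <= eps) by (apply Rmin_glb; lra); nra).
    assert (sum_lt (fun i => sx i ^ 2) n <= J^2 - eta) by lra.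
    assert (K <= eta / 2).
    { unfold K. assert (0 <= eps) by (apply Rmin_glb; lra). nra. }
    nra.
  - rewrite (sum_lt_ext _ (fun i => (sx i)^2)).
    2:{ intros i Hi. rewrite Hs by auto.
        destruct (inb n1 (I i)) eqn:E1, (inb n2 (I i)) eqn:E2; unfold b2r; try lra;
        exfalso; apply Hno; exists i; rewrite E1, E2; split; auto; discriminate. }
    assert (sum_lt (fun i => sx i ^ 2) n <= J^2) by (apply (fam_le x J HJ n I sx); auto).
    nra.
Qed.

End Pert.

Lemma B1_pert (x : seqR) (J L : R) (n1 n2 : nat) :
  Jnorm x = Finite J -> J <= 1 -> is_lim_seq (Su x) L ->
  extreme_point_BJ x -> (n1 < n2)%nat ->
  forall eta, 0 < eta -> exists c M, sepc n1 n2 c /\ J^2 - eta < Vs x L c M.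
Proof.
  intros HJ HJ1 HL Hext Hn eta Heta.
  destruct (classic (exists c M, sepc n1 n2 c /\ J^2 - eta < Vs x L c M)) as [H|H]; auto.
  exfalso.
  assert (Hsep : forall c M, sepc n1 n2 c -> Vs x L c M <= J^2 - eta).
  { intros c M Hc. apply Rnot_lt_le. intro Hlt. apply H. exists c, M; auto. }
  set (eps := Rmin 1 (eta / 6)).
  assert (Heps : 0 < eps) by (apply Rmin_glb_lt; lra).
  destruct Hext as [_ Hext].
  specialize (Hext (fun j => x j + eps * dpert n1 n2 j) (fun j => x j + (- eps) * dpert n1 n2 j) (/2)).
  destruct Hext as [Hy _].
  - apply (BJ_pert x J HJ HJ1 L HL n1 n2 Hn eta Heta Hsep). rewrite Rabs_right by lra; unfold eps; apply Rle_refl.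
  - apply (BJ_pert x J HJ HJ1 L HL n1 n2 Hn eta Heta Hsep). rewrite Rabs_left by lra; rewrite Ropp_involutive; unfold eps; apply Rle_refl.
  - lra.
  - intros k. lra.
  - specialize (Hy n1). unfold dpert, b2r in Hy. rewrite Nat.eqb_refl in Hy.
    destruct (Nat.eqb_spec n1 n2); [lia|]. lra.
Qed.


Definition infm (P : nat -> Prop) : Prop := forall K, exists k, (K <= k)%nat /\ P k.

Fixpoint Gk (cs : nat -> nat -> bool) (n : nat) : nat -> bool :=
  match n with
  | O => fun _ => false
  | S n => let g := Gk cs n in
     let b := if excluded_middle_informative
                  (infm (fun k => (forall m, (m < n)%nat -> cs k m = g m) /\ cs k n = true))
              then true else false in
     fun m => if Nat.ltb m n then g m else b
  end.

Lemma konig (cs : nat -> nat -> bool) :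
  exists g : nat -> bool, forall N K, exists k, (K <= k)%nat /\ forall m, (m <= N)%nat -> cs k m = g m.
Proof.
  set (g := fun m => Gk cs (S m) m).
  assert (HG : forall n m, (m < n)%nat -> Gk cs n m = g m).
  { induction n as [|n IH]; intros m Hm; [lia|]. simpl.
    destruct (Nat.ltb_spec m n); [apply IH; auto|].
    assert (m = n) by lia. subst m. unfold g. simpl. rewrite Nat.ltb_irrefl. auto. }
  assert (Hinv : forall n, infm (fun k => forall m, (m < n)%nat -> cs k m = Gk cs n m)).
  { induction n as [|n IH].
    - intros K. exists K. split; auto. intros; lia.
    - simpl. destruct excluded_middle_informative as [Hi|Hni].
      + intros K. destruct (Hi K) as [k [Hk [H1 H2]]]. exists k. split; auto.
        intros m Hm. destruct (Nat.ltb_spec m n); auto. assert (m = n) by lia. subst; auto.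
      + unfold infm in Hni. apply not_all_ex_not in Hni. destruct Hni as [K0 HK0].
        intros K. destruct (IH (Nat.max K K0)) as [k [Hk H1]]. exists k. split; [lia|].
        intros m Hm. destruct (Nat.ltb_spec m n); auto. assert (m = n) by lia. subst.
        destruct (cs k n) eqn:E; auto. exfalso. apply HK0. exists k. split; [lia|]. auto. }
  exists g. intros N K. destruct (Hinv (S N) K) as [k [Hk H]]. exists k. split; auto.
  intros m Hm. rewrite H by lia. apply HG. lia.
Qed.

Lemma sum_lt_tail (f g : nat -> R) K M :
  (K <= M)%nat -> (forall m, (K <= m)%nat -> f m = g m) ->
  sum_lt f M - sum_lt f K = sum_lt g M - sum_lt g K.
Proof.
  intros HKM H. induction HKM; [lra|]. rewrite !sum_lt_S. rewrite H by lia. lra.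
Qed.

Lemma eps_choice (K delta : R) : 0 <= K -> 0 < delta ->
  exists eps, 0 < eps /\ 4 * K * eps + 4 * eps^2 <= delta.
Proof.
  intros HK Hd. exists (Rmin 1 (delta / (4 * K + 4))).
  assert (H4 : 0 < 4 * K + 4) by lra.
  assert (Hq : 0 < delta / (4 * K + 4)) by (apply Rdiv_lt_0_compat; lra).
  set (e := Rmin 1 (delta / (4 * K + 4))).
  assert (He1 : e <= 1) by apply Rmin_l.
  assert (He2 : e <= delta / (4 * K + 4)) by apply Rmin_r.
  assert (He0 : 0 < e) by (apply Rmin_glb_lt; lra).
  split; auto.
  assert ((4 * K + 4) * e <= delta).
  { apply Rmult_le_compat_l with (r := 4 * K + 4) in He2; [|lra].
    unfold Rdiv in He2. rewrite <- Rmult_assoc, (Rmult_comm (4*K+4) delta), Rmult_assoc,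
      Rinv_r in He2 by lra. lra. }
  nra.
Qed.

Section Compact.
Variable x : seqR.
Variable J : R.
Hypothesis HJ : Jnorm x = Finite J.
Variable L : R.
Hypothesis HL : is_lim_seq (Su x) L.

Lemma cauchyL eps : 0 < eps -> exists N, forall p, (N <= p)%nat -> Rabs (Su x p - L) <= eps.
Proof.
  intros He. apply is_lim_seq_spec in HL. destruct (HL (mkposreal eps He)) as [N HN].
  exists N. intros p Hp. left. apply HN; auto.
Qed.

Definition beyond (N : nat) (c : nat -> bool) (m : nat) : bool :=
  match nextc c m with Some k => Nat.ltb N k | None => true end.

Lemma HC eps N : 0 <= eps -> (forall p, (N < p)%nat -> Rabs (Su x p - L) <= eps) ->
  forall c c', (forall m, (m <= N)%nat -> c m = c' m) ->
  Vs x L c (S N) <= Vs x L c' (S N) + (4 * J * eps + 4 * eps^2).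
Proof.
  intros He Hp c c' Hcc.
  pose proof (J_nonneg x J HJ) as HJ0.
  set (K := 4 * J * eps + 4 * eps^2).
  set (P := fun m => st c m && beyond N c m).
  assert (Hbeyond : forall c0 m, beyond N c0 m = true -> Rabs (Endc x L c0 m - L) <= eps).
  { intros c0 m. unfold beyond, Endc. destruct (nextc c0 m).
    - intros H. apply Nat.ltb_lt in H. apply Hp; auto.
    - intros _. unfold Rminus. rewrite Rplus_opp_r, Rabs_R0. auto. }
  assert (Hnext : forall c1 c2 m k, (m <= N)%nat -> (forall j, (j <= N)%nat -> c1 j = c2 j) ->
            nextc c1 m = Some k -> (k <= N)%nat -> nextc c2 m = Some k).
  { intros c1 c2 m k Hm H12 E Hk. apply (nextc_ext_Some c1 c2 m k E). intros; apply H12; lia. }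
  assert (Hpt : forall m, (m <= N)%nat -> term x L c m <= term x L c' m + (if P m then K else 0)).
  { intros m Hm. unfold P. unfold term.
    assert (Est : st c m = st c' m) by (unfold st; rewrite Hcc by lia; auto).
    rewrite <- Est. destruct (st c m) eqn:Es; simpl; [|lra].
    destruct (beyond N c m) eqn:Eb.
    - assert (Eb' : beyond N c' m = true).
      { unfold beyond in *. destruct (nextc c' m) as [k|] eqn:E'; auto.
        apply Nat.ltb_lt. destruct (Nat.le_gt_cases k N); auto.
        rewrite (Hnext c' c m k Hm (fun j Hj => eq_sym (Hcc j Hj)) E' H) in Eb.
        apply Nat.ltb_lt in Eb. lia. }
      pose proof (Hbeyond c m Eb). pose proof (Hbeyond c' m Eb').
      destruct (term_le x J HJ L HL c' m) as [Ht|Ht]; [|rewrite <- Est in Ht; congruence].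
      set (u := Endc x L c' m - Su x m). set (v := Endc x L c m - Endc x L c' m).
      assert (Hv : Rabs v <= 2 * eps).
      { unfold v. replace (Endc x L c m - Endc x L c' m) with 
          ((Endc x L c m - L) - (Endc x L c' m - L)) by ring.
        eapply Rle_trans; [apply Rabs_triang|]. rewrite Rabs_Ropp. lra. }
      replace (Endc x L c m - Su x m) with (u + v) by (unfold u, v; ring).
      assert (u * v <= J * (2 * eps)).
      { eapply Rle_trans; [apply Rle_abs|]. rewrite Rabs_mult.
        apply Rmult_le_compat; auto using Rabs_pos. }
      assert (v^2 <= (2*eps)^2).
      { rewrite <- pow2_abs. apply pow_incr. split; auto using Rabs_pos. }
      fold u. unfold K. nra.
    - unfold beyond in Eb. destruct (nextc c m) as [k|] eqn:E; [|discriminate].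
      apply Nat.ltb_ge in Eb. unfold Endc. rewrite E.
      rewrite (Hnext c c' m k Hm Hcc E Eb). lra. }
  unfold Vs. eapply Rle_trans; [apply sum_lt_le; intros m Hm; apply Hpt; lia|].
  rewrite sum_lt_plus. apply Rplus_le_compat_l.
  apply at_most_one; [unfold K; nra|].
  intros i j Hi Hj Ei Ej. unfold P in Ei, Ej. apply andb_prop in Ei. apply andb_prop in Ej.
  destruct Ei as [Ei1 Ei2], Ej as [Ej1 Ej2].
  assert (Hgen : forall a b, (a < b <= N)%nat -> st c b = true -> beyond N c a = true -> False).
  { intros a b Hab Hb Ha. unfold st in Hb. apply orb_prop in Hb.
    destruct Hb as [Hb|Hb]; [apply Nat.eqb_eq in Hb; lia|].
    unfold beyond in Ha. destruct (nextc c a) as [k|] eqn:E.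
    - apply nextc_Some in E. destruct E as [E1 [E2 E3]]. apply Nat.ltb_lt in Ha.
      rewrite E3 in Hb by lia. discriminate.
    - rewrite (nextc_None c a E b) in Hb; [discriminate|lia]. }
  destruct (Nat.lt_total i j) as [Hl|[Hl|Hl]]; auto.
  - exfalso. apply (Hgen i j); auto. lia.
  - exfalso. apply (Hgen j i); auto. lia.
Qed.

Variables n1 n2 : nat.
Hypothesis HB1 : forall eta, 0 < eta -> exists c M, sepc n1 n2 c /\ J^2 - eta < Vs x L c M.

Lemma TL delta : 0 < delta -> exists N0, forall N, (N0 <= N)%nat -> forall c M,
  (S (S N) <= M)%nat -> Vs x L c M - Vs x L c (S (S N)) <= delta.
Proof.
  intros Hd. pose proof (J_nonneg x J HJ) as HJ0.
  destruct (HB1 (delta / 3) ltac:(lra)) as [h [M0 [_ Hh]]].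
  destruct (eps_choice J (delta / 3) HJ0 ltac:(lra)) as [eps [He Heps]].
  destruct (cauchyL eps He) as [N1 HN1].
  exists (Nat.max M0 N1). intros N HN c M HM.
  set (c' := fun m => if Nat.leb m N then h m else if Nat.eqb m (S N) then true else c m).
  pose proof (Vs_le x J HJ L HL c' M) as H1.
  assert (H2 : Vs x L c' M - Vs x L c' (S (S N)) = Vs x L c M - Vs x L c (S (S N))).
  { unfold Vs. apply sum_lt_tail; auto. intros m Hm. unfold term.
    assert (Est : st c' m = st c m).
    { unfold st, c'. destruct (Nat.leb_spec m N); [lia|].
      destruct (Nat.eqb_spec m (S N)); [lia|auto]. }
    rewrite Est. unfold Endc.
    rewrite (nextc_ext c' c m); auto.
    intros k Hk. unfold c'. destruct (Nat.leb_spec k N); [lia|].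
    destruct (Nat.eqb_spec k (S N)); [lia|auto]. }
  assert (H3 : Vs x L h (S N) <= Vs x L c' (S N) + (4 * J * eps + 4 * eps^2)).
  { apply HC; [lra| |].
    - intros p Hp. apply HN1. lia.
    - intros m Hm. unfold c'. destruct (Nat.leb_spec m N); [auto|lia]. }
  assert (H4 : Vs x L h M0 <= Vs x L h (S N)) by (apply Vs_mono; lia).
  assert (H5 : Vs x L c' (S N) <= Vs x L c' (S (S N))).
  { apply Vs_mono; lia. }
  lra.
Qed.

Lemma compact_limit : exists g, sepc n1 n2 g /\
  forall eta, 0 < eta -> exists M, J^2 - eta < Vs x L g M.
Proof.
  pose proof (J_nonneg x J HJ) as HJ0.
  assert (Hch : forall k : nat, exists p : (nat -> bool) * nat,
     sepc n1 n2 (fst p) /\ J^2 - / INR (S k) < Vs x L (fst p) (snd p)).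
  { intros k. destruct (HB1 (/ INR (S k))) as [c [M H]].
    - apply Rinv_0_lt_compat. apply lt_0_INR. lia.
    - exists (c, M). auto. }
  set (cs := fun k => fst (proj1_sig (constructive_indefinite_description _ (Hch k)))).
  set (Ms := fun k => snd (proj1_sig (constructive_indefinite_description _ (Hch k)))).
  assert (Hcs : forall k, sepc n1 n2 (cs k) /\ J^2 - / INR (S k) < Vs x L (cs k) (Ms k)).
  { intros k. unfold cs, Ms. destruct constructive_indefinite_description; simpl; auto. }
  destruct (konig cs) as [g Hg].
  exists g. split.
  - destruct (Hg n2 0%nat) as [k [_ Hk]]. destruct (Hcs k) as [[m [Hm1 Hm2]] _].
    exists m. split; auto. rewrite <- Hk by lia. auto.
  - intros eta Heta.
    destruct (TL (eta / 3) ltac:(lra)) as [N0 HN0].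
    destruct (eps_choice J (eta / 3) HJ0 ltac:(lra)) as [eps [He Heps]].
    destruct (cauchyL eps He) as [N1 HN1].
    set (N := Nat.max N0 N1).
    assert (H3e : 0 <= 3 / eta) by (apply Rmult_le_pos; [lra|left; apply Rinv_0_lt_compat; lra]).
    destruct (nfloor_ex (3 / eta) H3e) as [K0 [_ HK0]].
    destruct (Hg (S N) K0) as [k [Hk Hagree]].
    exists (S (S N)).
    destruct (Hcs k) as [_ Hv].
    assert (Hinv : / INR (S k) <= eta / 3).
    { rewrite S_INR. assert (INR K0 <= INR k) by (apply le_INR; auto).
      assert (3 / eta < INR k + 1) by lra.
      assert (0 < INR k + 1) by (pose proof (pos_INR k); lra).
      apply Rle_trans with (/ (3 / eta)).
      - apply Rinv_le_contravar; [apply Rdiv_lt_0_compat; lra|lra].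
      - unfold Rdiv. rewrite Rinv_mult, Rinv_inv. lra. }
    assert (Htail : Vs x L (cs k) (Ms k) <= Vs x L (cs k) (S (S N)) + eta / 3).
    { destruct (Nat.le_gt_cases (S (S N)) (Ms k)) as [Hle|Hlt].
      - pose proof (HN0 N ltac:(lia) (cs k) (Ms k) Hle). lra.
      - pose proof (Vs_mono x L (cs k) (Ms k) (S (S N)) ltac:(lia)). lra. }
    assert (Hhc : Vs x L (cs k) (S (S N)) <= Vs x L g (S (S N)) + (4 * J * eps + 4 * eps^2)).
    { apply HC; [lra| |].
      - intros p Hp. apply HN1. lia.
      - intros m Hm. apply Hagree. auto. }
    lra.
Qed.

End Compact.


Lemma least_ge (P : nat -> Prop) a : (exists m, (a <= m)%nat /\ P m) ->
  exists m, (a <= m)%nat /\ P m /\ forall j, (a <= j < m)%nat -> ~ P j.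
Proof.
  intros [m0 Hm0].
  induction m0 as [m0 IH] using (well_founded_induction Wf_nat.lt_wf).
  destruct (classic (exists j, (a <= j < m0)%nat /\ P j)) as [[j Hj]|Hn].
  - apply (IH j); [lia|]. split; [lia|tauto].
  - exists m0. split; [tauto|split; [tauto|]]. intros j Hj Pj. apply Hn; exists j; auto.
Qed.

Definition lsupp (x : seqR) (a : nat) : nat :=
  match excluded_middle_informative (exists m, (a <= m)%nat /\ x m <> 0) with
  | left H => proj1_sig (constructive_indefinite_description _
                 (least_ge (fun m => x m <> 0) a H))
  | right _ => a
  end.

Lemma lsupp_spec x a : (exists m, (a <= m)%nat /\ x m <> 0) ->
  (a <= lsupp x a)%nat /\ x (lsupp x a) <> 0 /\ forall j, (a <= j < lsupp x a)%nat -> x j = 0.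
Proof.
  intros H. unfold lsupp. destruct excluded_middle_informative; [|tauto].
  destruct constructive_indefinite_description as [m [H1 [H2 H3]]]; simpl.
  split; auto. split; auto. intros j Hj. apply NNPP. apply H3; auto.
Qed.

Definition Nc (x : seqR) (g : nat -> bool) (m : nat) : bool :=
  if excluded_middle_informative (x m <> 0 /\ exists k, (k <= m)%nat /\ st g k = true /\
         forall j, (k <= j < m)%nat -> x j = 0) then true else false.

Lemma Nc_supp x g m : Nc x g m = true -> x m <> 0.
Proof. unfold Nc. destruct excluded_middle_informative; [tauto|discriminate]. Qed.

Lemma Nc_intro x g m k : x m <> 0 -> (k <= m)%nat -> st g k = true ->
  (forall j, (k <= j < m)%nat -> x j = 0) -> Nc x g m = true.
Proof.
  intros. unfold Nc. destruct excluded_middle_informative as [|Hn]; auto.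
  exfalso; apply Hn. split; auto. exists k; auto.
Qed.

Lemma Nc_elim x g m : Nc x g m = true -> exists k, (k <= m)%nat /\ st g k = true /\
         forall j, (k <= j < m)%nat -> x j = 0.
Proof. unfold Nc. destruct excluded_middle_informative; [tauto|discriminate]. Qed.

Section Norm.
Variable x : seqR.
Variable L : R.
Hypothesis HL : is_lim_seq (Su x) L.
Variable g : nat -> bool.

Lemma Nc_after a p j : (a <= p)%nat -> x p <> 0 -> (p < j)%nat -> Nc x g j = true ->
  exists k0, (p < k0 <= j)%nat /\ g k0 = true.
Proof.
  intros Hap Hp Hpj Hj. destruct (Nc_elim x g j Hj) as [k0 [Hk0 [Hst Hz]]].
  exists k0. destruct (Nat.le_gt_cases k0 p).
  - exfalso. apply Hp. apply Hz. lia.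
  - split; [lia|]. unfold st in Hst. apply orb_prop in Hst. destruct Hst as [E|E]; auto.
    apply Nat.eqb_eq in E. lia.
Qed.

Lemma term_Nc a : st g a = true -> term x L g a <> 0 ->
  exists p, (a <= p)%nat /\ x p <> 0 /\ (forall j, (a <= j < p)%nat -> x j = 0) /\
    (match nextc g a with Some k => (p < k)%nat | None => True end) /\
    term x L (Nc x g) p = term x L g a.
Proof.
  intros Hst Ht.
  assert (Hex : exists m, (a <= m)%nat /\ x m <> 0 /\
            match nextc g a with Some k => (m < k)%nat | None => True end).
  { apply NNPP. intro Hn. apply Ht. unfold term. rewrite Hst. unfold Endc.
    destruct (nextc g a) as [k|] eqn:Ek.
    - apply nextc_Some in Ek. rewrite (Su_const x a k); [ring|lia|].
      intros j Hj. apply NNPP. intro Hxj. apply Hn. exists j. split; [lia|split; auto; lia].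
    - rewrite (lim_const_after x L a HL); [ring|].
      intros j Hj. apply NNPP. intro Hxj. apply Hn. exists j; auto. }
  destruct Hex as [m [Hm1 [Hm2 Hm3]]].
  destruct (lsupp_spec x a (ex_intro _ m (conj Hm1 Hm2))) as [Hp1 [Hp2 Hp3]].
  set (p := lsupp x a) in *.
  assert (Hpm : (p <= m)%nat).
  { destruct (Nat.le_gt_cases p m); auto. exfalso. apply Hm2. apply Hp3. lia. }
  exists p. split; auto. split; auto. split; auto.
  split; [destruct (nextc g a); auto; lia|].
  assert (HNp : Nc x g p = true) by (apply (Nc_intro x g p a); auto).
  assert (HSp : Su x p = Su x a) by (apply Su_const; auto).
  assert (HE : Endc x L (Nc x g) p = Endc x L g a).
  { unfold Endc. destruct (nextc g a) as [k|] eqn:Ek.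
    - pose proof (nextc_Some _ _ _ Ek) as [Ek1 [Ek2 Ek3]].
      assert (Hno : forall j, (p < j)%nat -> Nc x g j = true -> (k <= j)%nat).
      { intros j Hj Hj'. destruct (Nc_after a p j Hp1 Hp2 Hj Hj') as [k0 [Hk0 Hgk0]].
        destruct (Nat.le_gt_cases k k0); [lia|]. rewrite Ek3 in Hgk0 by lia. discriminate. }
      assert (Hstk : st g k = true) by (unfold st; rewrite Ek2, orb_true_r; auto).
      destruct (classic (exists m, (k <= m)%nat /\ x m <> 0)) as [Hq|Hq].
      + destruct (lsupp_spec x k Hq) as [Hq1 [Hq2 Hq3]].
        rewrite (nextc_char_Some (Nc x g) p (lsupp x k)).
        * apply Su_const; auto.
        * lia.
        * apply (Nc_intro x g _ k); auto.
        * intros j Hj. destruct (Nc x g j) eqn:E; auto. exfalso.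
          pose proof (Hno j ltac:(lia) E). apply (Nc_supp x g j E). apply Hq3. lia.
      + rewrite nextc_char_None.
        * apply (lim_const_after x L k HL). intros j Hj. apply NNPP. intro Hxj.
          apply Hq. exists j; auto.
        * intros j Hj. destruct (Nc x g j) eqn:E; auto. exfalso.
          pose proof (Hno j Hj E). apply Hq. exists j. split; auto. apply (Nc_supp x g j E).
    - rewrite nextc_char_None; auto.
      intros j Hj. destruct (Nc x g j) eqn:E; auto. exfalso.
      destruct (Nc_after a p j Hp1 Hp2 Hj E) as [k0 [Hk0 Hgk0]].
      rewrite (nextc_None g a Ek k0) in Hgk0 by lia. discriminate. }
  unfold term. rewrite Hst. unfold st at 1. rewrite HNp, orb_true_r.
  rewrite HSp, HE. auto.
Qed.

Lemma Nc_sup : forall M, exists M', Vs x L g M <= Vs x L (Nc x g) M'.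
Proof.
  intros M.
  set (P := fun a => if Req_EM_T (term x L g a) 0 then false else true).
  assert (Hspec : forall a, P a = true -> exists p, (a <= p)%nat /\ x p <> 0 /\
    (forall j, (a <= j < p)%nat -> x j = 0) /\
    (match nextc g a with Some k => (p < k)%nat | None => True end) /\
    term x L (Nc x g) p = term x L g a /\ st g a = true).
  { intros a Ha. unfold P in Ha. destruct Req_EM_T as [|Hne]; [discriminate|].
    assert (Hst : st g a = true).
    { destruct (st g a) eqn:E; auto. exfalso. apply Hne. unfold term. rewrite E; auto. }
    destruct (term_Nc a Hst Hne) as [p Hp]. exists p. tauto. }
  set (phi := fun a => match excluded_middle_informative (P a = true) with
     | left H => proj1_sig (constructive_indefinite_description _ (Hspec a H))
     | right _ => 0%nat end).
  assert (Hphi : forall a, P a = true -> (a <= phi a)%nat /\ x (phi a) <> 0 /\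
    (forall j, (a <= j < phi a)%nat -> x j = 0) /\
    (match nextc g a with Some k => (phi a < k)%nat | None => True end) /\
    term x L (Nc x g) (phi a) = term x L g a /\ st g a = true).
  { intros a Ha. unfold phi. destruct excluded_middle_informative; [|tauto].
    destruct constructive_indefinite_description; simpl; auto. }
  destruct (exists_bound phi M) as [B HB]. exists B.
  unfold Vs.
  rewrite (sum_lt_ext (term x L g) (fun a => if P a then term x L (Nc x g) (phi a) else 0)).
  2:{ intros a Ha. destruct (P a) eqn:E.
      - destruct (Hphi a E) as [_ [_ [_ [_ [H _]]]]]. auto.
      - unfold P in E. destruct Req_EM_T; auto; discriminate. }
  apply reindex; auto using term_nonneg.
  intros i j Hi Hj Pi Pj E.
  assert (Hgen : forall a b, (a < b)%nat -> P a = true -> P b = true -> (phi a < phi b)%nat).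
  { intros a b Hab Pa Pb. destruct (Hphi a Pa) as [_ [_ [_ [Ha _]]]].
    destruct (Hphi b Pb) as [Hb1 [_ [_ [_ [_ Hb]]]]].
    unfold st in Hb. apply orb_prop in Hb. destruct Hb as [Hb|Hb]; [apply Nat.eqb_eq in Hb; lia|].
    destruct (nextc g a) as [k|] eqn:Ek.
    - apply nextc_Some in Ek. destruct Ek as [_ [_ Ek3]].
      destruct (Nat.le_gt_cases k b); [lia|]. rewrite Ek3 in Hb by lia. discriminate.
    - rewrite (nextc_None g a Ek b) in Hb by lia. discriminate. }
  destruct (Nat.lt_total i j) as [Hl|[Hl|Hl]]; auto.
  - specialize (Hgen i j Hl Pi Pj). lia.
  - specialize (Hgen j i Hl Pj Pi). lia.
Qed.

End Norm.


Lemma last_start (c : nat -> bool) m : exists a, (a <= m)%nat /\ st c a = true /\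
  forall j, (a < j <= m)%nat -> c j = false.
Proof.
  induction m as [|m [a [H1 [H2 H3]]]].
  - exists 0%nat. split; auto. split; [reflexivity|]. intros; lia.
  - destruct (c (S m)) eqn:E.
    + exists (S m). split; auto. split; [unfold st; rewrite E, orb_true_r; auto|]. intros; lia.
    + exists a. split; [lia|]. split; auto. intros j Hj.
      destruct (Nat.eq_dec j (S m)); [subst; auto|]. apply H3; lia.
Qed.

Lemma sum_two (f f' : nat -> R) a b M :
  (forall m, m <> a -> m <> b -> f' m = f m) -> a <> b -> (a < M)%nat -> (b < M)%nat ->
  sum_lt f' M = sum_lt f M + (f' a - f a) + (f' b - f b).
Proof.
  intros H Hab Ha Hb.
  rewrite (sum_lt_ext f' (fun m => f m + ((if Nat.eqb m a then f' a - f a else 0) +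
                                           (if Nat.eqb m b then f' b - f b else 0)))).
  - rewrite sum_lt_plus, sum_lt_plus, !sum_lt_ind1 by auto. lra.
  - intros m Hm. destruct (Nat.eqb_spec m a), (Nat.eqb_spec m b); subst; try lia; try lra.
    rewrite H by auto. lra.
Qed.

Lemma term_eq x L c c' m : st c m = st c' m ->
  (st c m = true -> nextc c m = nextc c' m) -> term x L c m = term x L c' m.
Proof.
  intros H1 H2. unfold term, Endc. rewrite <- H1. destruct (st c m); auto. rewrite H2; auto.
Qed.

Section Local.
Variable x : seqR.
Variable J : R.
Hypothesis HJ : Jnorm x = Finite J.
Variable L : R.
Hypothesis HL : is_lim_seq (Su x) L.
Variables n1 n2 : nat.
Hypothesis Hcons : consecutive_in_supp x n1 n2.
Variable c : nat -> bool.
Hypothesis Hc1 : forall m, c m = true -> x m <> 0.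
Hypothesis Hc2 : c n2 = true.
Hypothesis Hsup : forall eta, 0 < eta -> exists M, J^2 - eta < Vs x L c M.

Lemma mod_le c' a b : a <> b ->
  (forall m, m <> a -> m <> b -> term x L c' m = term x L c m) ->
  (term x L c' a - term x L c a) + (term x L c' b - term x L c b) <= 0.
Proof.
  intros Hab H. apply Rnot_lt_le. intro Hpos.
  set (d := (term x L c' a - term x L c a) + (term x L c' b - term x L c b)) in *.
  destruct (Hsup d Hpos) as [M HM].
  set (M' := Nat.max M (S (Nat.max a b))).
  pose proof (Vs_mono x L c M M' ltac:(lia)).
  pose proof (Vs_le x J HJ L HL c' M').
  assert (E : Vs x L c' M' = Vs x L c M' + d).
  { unfold Vs, d. rewrite (sum_two (term x L c) (term x L c') a b M'); auto; try lia. lra. }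
  lra.
Qed.

Lemma c_zero j : (n1 < j < n2)%nat -> c j = false.
Proof.
  intros Hj. destruct (c j) eqn:E; auto. exfalso. apply (Hc1 j E).
  destruct Hcons as [_ [_ [_ H]]]. apply H; auto.
Qed.

Lemma local_sign : x n1 * x n2 < 0.
Proof.
  destruct Hcons as [Hn [Hx1 [Hx2 Hz]]]. unfold in_supp in *.
  destruct (last_start c n1) as [a [Ha1 [Ha2 Ha3]]].
  assert (Hn2c : forall j, (a < j < n2)%nat -> c j = false).
  { intros j Hj. destruct (Nat.le_gt_cases j n1); [apply Ha3; lia|apply c_zero; lia]. }
  assert (Hna : nextc c a = Some n2) by (apply nextc_char_Some; auto; lia).
  assert (HS : Su x n2 = Su x n1 + x n1).
  { rewrite (Su_const x (S n1) n2); [unfold Su; rewrite sum_lt_S; auto|lia|].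
    intros j Hj. apply Hz; lia. }
  assert (Hst2 : st c n2 = true) by (unfold st; rewrite Hc2, orb_true_r; auto).
  set (al := Su x n2 - Su x a). set (be := Endc x L c n2 - Su x n2).
  assert (Ta : term x L c a = al^2) by (unfold term, Endc; rewrite Ha2, Hna; auto).
  assert (Tb : term x L c n2 = be^2) by (unfold term; rewrite Hst2; auto).
  assert (Hbelow : forall m, (m < a)%nat -> exists k, nextc c m = Some k /\ (k <= a)%nat).
  { intros m Hm. unfold st in Ha2. apply orb_prop in Ha2. destruct Ha2 as [E|E].
    - apply Nat.eqb_eq in E. lia.
    - destruct (least_ex c m (ex_intro _ a (conj Hm E))) as [k [Hk1 [Hk2 Hk3]]].
      exists k. split; [apply nextc_char_Some; auto|].
      destruct (Nat.le_gt_cases k a); auto. rewrite Hk3 in E by lia. discriminate. }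
  assert (Hmerge : al * be <= 0).
  { set (cm := fun m => if Nat.eqb m n2 then false else c m).
    assert (Hna' : nextc cm a = nextc c n2).
    { destruct (nextc c n2) as [e|] eqn:Ee.
      - apply nextc_Some in Ee. destruct Ee as [Ee1 [Ee2 Ee3]].
        apply nextc_char_Some; [lia|unfold cm; destruct (Nat.eqb_spec e n2); [lia|auto]|].
        intros j Hj. unfold cm. destruct (Nat.eqb_spec j n2); auto.
        destruct (Nat.le_gt_cases j n2); [apply Hn2c; lia|apply Ee3; lia].
      - apply nextc_char_None. intros j Hj. unfold cm. destruct (Nat.eqb_spec j n2); auto.
        destruct (Nat.le_gt_cases j n2); [apply Hn2c; lia|apply (nextc_None c n2 Ee); lia]. }
    assert (Han2 : a <> n2) by lia.
    assert (Hoth : forall m, m <> a -> m <> n2 -> term x L cm m = term x L c m).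
    { intros m Hm1 Hm2. apply term_eq.
      + unfold st, cm. destruct (Nat.eqb_spec m n2); [lia|auto].
      + intros Hs. destruct (Nat.lt_total m n2) as [Hl|[Hl|Hl]]; [|lia|].
        * destruct (Nat.lt_total m a) as [Hl2|[Hl2|Hl2]]; [|lia|].
          -- destruct (Hbelow m Hl2) as [k [Ek Hk]]. rewrite Ek.
             apply (nextc_ext_Some c cm m k Ek). intros j Hj. unfold cm.
             destruct (Nat.eqb_spec j n2); [lia|auto].
          -- exfalso. unfold st in Hs. apply orb_prop in Hs. destruct Hs as [E|E].
             ++ apply Nat.eqb_eq in E. lia.
             ++ unfold cm in E. destruct (Nat.eqb_spec m n2); [lia|].
                rewrite Hn2c in E by lia. discriminate.
        * apply nextc_ext. intros k Hk. unfold cm. destruct (Nat.eqb_spec k n2); [lia|auto]. }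
    pose proof (mod_le cm a n2 Han2 Hoth) as Hm.
    assert (T1 : term x L cm a = (al + be)^2).
    { unfold term, Endc. replace (st cm a) with true.
      - rewrite Hna'. unfold al, be, Endc. f_equal. ring.
      - unfold st, cm in *. destruct (Nat.eqb_spec a n2); [lia|auto]. }
    assert (T2 : term x L cm n2 = 0).
    { unfold term, st, cm. rewrite Nat.eqb_refl. destruct (Nat.eqb_spec n2 0); [lia|auto]. }
    rewrite T1, T2, Ta, Tb in Hm. nra. }
  assert (Hs1 : x n1 * x n1 <= x n1 * al).
  { destruct (Nat.eq_dec a n1) as [Ea|Ea].
    - subst a. unfold al. rewrite HS. lra.
    - set (cs := fun m => if Nat.eqb m n1 then true else c m).
      assert (Hc1f : c n1 = false) by (apply Ha3; lia).
      assert (Hoth : forall m, m <> a -> m <> n1 -> term x L cs m = term x L c m).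
      { intros m Hm1 Hm2. apply term_eq.
        * unfold st, cs. destruct (Nat.eqb_spec m n1); [lia|auto].
        * intros Hs. destruct (Nat.lt_total m n1) as [Hl|[Hl|Hl]]; [|lia|].
          -- destruct (Nat.lt_total m a) as [Hl2|[Hl2|Hl2]]; [|lia|].
             ++ destruct (Hbelow m Hl2) as [k [Ek Hk]]. rewrite Ek.
                apply (nextc_ext_Some c cs m k Ek). intros j Hj. unfold cs.
                destruct (Nat.eqb_spec j n1); [lia|auto].
             ++ exfalso. unfold st in Hs. apply orb_prop in Hs. destruct Hs as [E|E].
                ** apply Nat.eqb_eq in E. lia.
                ** unfold cs in E. destruct (Nat.eqb_spec m n1); [lia|].
                   rewrite Ha3 in E by lia. discriminate.
          -- apply nextc_ext. intros k Hk. unfold cs. destruct (Nat.eqb_spec k n1); [lia|auto]. }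
      pose proof (mod_le cs a n1 Ea Hoth) as Hm.
      assert (T1 : term x L cs a = (Su x n1 - Su x a)^2).
      { unfold term, Endc. replace (st cs a) with true.
        - rewrite (nextc_char_Some cs a n1); [auto|lia|unfold cs; rewrite Nat.eqb_refl; auto|].
          intros j Hj. unfold cs. destruct (Nat.eqb_spec j n1); [lia|]. apply Ha3; lia.
        - unfold st, cs in *. destruct (Nat.eqb_spec a n1); [lia|auto]. }
      assert (T2 : term x L cs n1 = (x n1)^2).
      { unfold term, Endc. unfold st at 1, cs at 1. rewrite Nat.eqb_refl, orb_true_r.
        rewrite (nextc_char_Some cs n1 n2); [rewrite HS; f_equal; ring|lia| |].
        - unfold cs. destruct (Nat.eqb_spec n2 n1); [lia|auto].
        - intros j Hj. unfold cs. destruct (Nat.eqb_spec j n1); [lia|]. apply c_zero; lia. }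
      assert (T3 : term x L c n1 = 0).
      { unfold term, st. rewrite Hc1f. destruct (Nat.eqb_spec n1 0); [lia|auto]. }
      rewrite T1, T2, T3, Ta in Hm.
      unfold al in *. rewrite HS in *. nra. }
  assert (Hs2 : x n2 * x n2 <= x n2 * be).
  { assert (HS2 : Su x (S n2) = Su x n2 + x n2) by (unfold Su; rewrite sum_lt_S; auto).
    destruct (c (S n2)) eqn:Ec.
    - assert (nextc c n2 = Some (S n2)) by (apply nextc_char_Some; auto; intros; lia).
      unfold be, Endc. rewrite H, HS2. lra.
    - set (ct := fun m => if Nat.eqb m (S n2) then true else c m).
      assert (Hne : n2 <> S n2) by lia.
      assert (Hoth : forall m, m <> n2 -> m <> S n2 -> term x L ct m = term x L c m).
      { intros m Hm1 Hm2. apply term_eq.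
        * unfold st, ct. destruct (Nat.eqb_spec m (S n2)); [lia|auto].
        * intros Hs. destruct (Nat.lt_total m n2) as [Hl|[Hl|Hl]]; [|lia|].
          -- destruct (least_ex c m (ex_intro _ n2 (conj Hl Hc2))) as [k [Hk1 [Hk2 Hk3]]].
             assert (Ek : nextc c m = Some k) by (apply nextc_char_Some; auto).
             assert (k <= n2)%nat.
             { destruct (Nat.le_gt_cases k n2); auto. rewrite Hk3 in Hc2 by lia. discriminate. }
             rewrite Ek. apply (nextc_ext_Some c ct m k Ek). intros j Hj. unfold ct.
             destruct (Nat.eqb_spec j (S n2)); [lia|auto].
          -- apply nextc_ext. intros k Hk. unfold ct. destruct (Nat.eqb_spec k (S n2)); [lia|auto]. }
      pose proof (mod_le ct n2 (S n2) Hne Hoth) as Hm.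
      assert (Hnx : nextc c n2 = nextc c (S n2)).
      { destruct (nextc c (S n2)) as [e|] eqn:Ee.
        - apply nextc_Some in Ee. destruct Ee as [Ee1 [Ee2 Ee3]].
          apply nextc_char_Some; auto; [lia|]. intros j Hj.
          destruct (Nat.eq_dec j (S n2)); [subst; auto|]. apply Ee3; lia.
        - apply nextc_char_None. intros j Hj.
          destruct (Nat.eq_dec j (S n2)); [subst; auto|]. apply (nextc_None c (S n2) Ee); lia. }
      assert (T1 : term x L ct n2 = (x n2)^2).
      { unfold term, Endc. replace (st ct n2) with true.
        - rewrite (nextc_char_Some ct n2 (S n2)); [rewrite HS2; f_equal; ring|lia| |intros; lia].
          unfold ct. rewrite Nat.eqb_refl. auto.
        - unfold st, ct. destruct (Nat.eqb_spec n2 (S n2)); [lia|]. rewrite Hc2, orb_true_r; auto. }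
      assert (T2 : term x L ct (S n2) = (be - x n2)^2).
      { unfold term, Endc. unfold st at 1, ct at 1. rewrite Nat.eqb_refl, orb_true_r.
        rewrite (nextc_ext ct c (S n2)).
        - rewrite <- Hnx. unfold be, Endc. rewrite HS2. f_equal. ring.
        - intros k Hk. unfold ct. destruct (Nat.eqb_spec k (S n2)); [lia|auto]. }
      assert (T3 : term x L c (S n2) = 0) by (unfold term, st; rewrite Ec; auto).
      rewrite T1, T2, T3, Tb in Hm. nra. }
  assert (P1 : 0 < x n1 * x n1) by (apply Rsqr_pos_lt in Hx1; unfold Rsqr in Hx1; auto).
  assert (P2 : 0 < x n2 * x n2) by (apply Rsqr_pos_lt in Hx2; unfold Rsqr in Hx2; auto).
  assert (Q : 0 < (x n1 * al) * (x n2 * be)) by (apply Rmult_lt_0_compat; lra).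
  destruct (Rlt_or_le (x n1 * x n2) 0) as [Hlt|Hge]; auto.
  exfalso. assert ((x n1 * al) * (x n2 * be) = (x n1 * x n2) * (al * be)) by ring.
  assert ((x n1 * x n2) * (al * be) <= 0).
  { apply Rmult_le_0_l; auto. }
  lra.
Qed.

End Local.


Lemma greatest_lt (P : nat -> Prop) q : (exists m, (m < q)%nat /\ P m) ->
  exists m, (m < q)%nat /\ P m /\ forall j, (m < j < q)%nat -> ~ P j.
Proof.
  induction q as [|q IH]; intros [m [Hm Pm]]; [lia|].
  destruct (classic (P q)) as [Pq|Pq].
  - exists q. split; [lia|split; auto]. intros; lia.
  - destruct (Nat.eq_dec m q); [subst; tauto|].
    destruct IH as [m' [H1 [H2 H3]]]; [exists m; split; auto; lia|].
    exists m'. split; [lia|split; auto]. intros j Hj. destruct (Nat.eq_dec j q); [subst; auto|].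
    apply H3; lia.
Qed.

Definition lsb (x : seqR) (q : nat) : nat :=
  match excluded_middle_informative (exists m, (m < q)%nat /\ x m <> 0) with
  | left H => proj1_sig (constructive_indefinite_description _
                 (greatest_lt (fun m => x m <> 0) q H))
  | right _ => 0%nat
  end.

Lemma lsb_spec x q : (exists m, (m < q)%nat /\ x m <> 0) ->
  (lsb x q < q)%nat /\ x (lsb x q) <> 0 /\ forall j, (lsb x q < j < q)%nat -> x j = 0.
Proof.
  intros H. unfold lsb. destruct excluded_middle_informative; [|tauto].
  destruct constructive_indefinite_description as [m [H1 [H2 H3]]]; simpl.
  split; auto. split; auto. intros j Hj. apply NNPP. apply H3; auto.
Qed.

Definition msupp (x : seqR) : option nat :=
  match excluded_middle_informative (exists m, x m <> 0 /\ forall j, (m < j)%nat -> x j = 0) with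
  | left H => Some (proj1_sig (constructive_indefinite_description _ H))
  | right _ => None
  end.

Lemma msupp_Some x h : msupp x = Some h -> x h <> 0 /\ forall j, (h < j)%nat -> x j = 0.
Proof.
  unfold msupp. destruct excluded_middle_informative; [|discriminate].
  intros E. injection E; intros <-. destruct constructive_indefinite_description; simpl; auto.
Qed.

Lemma msupp_None x : msupp x = None -> forall m, x m <> 0 -> forall N, exists n, (N < n)%nat /\ x n <> 0.
Proof.
  unfold msupp. destruct excluded_middle_informative as [|Hn]; [discriminate|].
  intros _ m Hm N. apply NNPP. intro H. apply Hn.
  destruct (greatest_lt (fun j => x j <> 0) (S (Nat.max m N))) as [h [H1 [H2 H3]]].
  - exists m. split; auto; lia.
  - exists h. split; auto. intros j Hj. apply NNPP. intro Hxj.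
    destruct (Nat.le_gt_cases j (Nat.max m N)).
    + apply (H3 j); auto. lia.
    + apply H. exists j. split; auto. lia.
Qed.

Lemma sum_n_lt (a : nat -> R) n : sum_n a n = sum_lt a (S n).
Proof.
  unfold sum_n. rewrite sum_n_m_Su by lia. unfold Su. simpl. lra.
Qed.

Section Family.
Variable x : seqR.
Variable J : R.
Hypothesis HJ : Jnorm x = Finite J.
Variable L : R.
Hypothesis HL : is_lim_seq (Su x) L.
Variables n1 n2 : nat.
Hypothesis Hcons : consecutive_in_supp x n1 n2.
Variable c : nat -> bool.
Hypothesis Hc1 : forall m, c m = true -> x m <> 0.
Hypothesis Hc2 : c n2 = true.
Hypothesis Hc3 : forall m, x m <> 0 -> (forall j, (j < m)%nat -> x j = 0) -> c m = true.
Hypothesis Hsup : forall eta, 0 < eta -> exists M, J^2 - eta < Vs x L c M.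

Fixpoint en (i : nat) : option nat :=
  match i with
  | O => if c 0 then Some 0%nat else nextc c 0
  | S i => match en i with Some p => nextc c p | None => None end
  end.

Lemma en_cut i p : en i = Some p -> c p = true.
Proof.
  destruct i; simpl.
  - destruct (c 0) eqn:E. + intros H; injection H; intros <-; auto.
    + intros H. apply nextc_Some in H; tauto.
  - destruct (en i); [|discriminate]. intros H. apply nextc_Some in H; tauto.
Qed.

Lemma en_first p : en 0 = Some p -> forall j, (j < p)%nat -> c j = false.
Proof.
  simpl. destruct (c 0) eqn:E.
  - intros H; injection H; intros <-. intros; lia.
  - intros H j Hj. apply nextc_Some in H. destruct H as [_ [_ H]].
    destruct (Nat.eq_dec j 0); [subst; auto|]. apply H; lia.
Qed.

Lemma en_None i j : en i = None -> (i <= j)%nat -> en j = None.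
Proof. intros H Hij. induction Hij; auto. simpl. rewrite IHHij; auto. Qed.

Lemma en_lt i j p q : en i = Some p -> en j = Some q -> (i < j)%nat -> (p < q)%nat.
Proof.
  intros Hi Hj Hij. revert q Hj. induction Hij as [|j Hij IH]; intros q Hj.
  - simpl in Hj. rewrite Hi in Hj. apply nextc_Some in Hj. lia.
  - simpl in Hj. destruct (en j) as [r|] eqn:Er; [|discriminate].
    specialize (IH r eq_refl). apply nextc_Some in Hj. lia.
Qed.

Lemma en_inj i j p : en i = Some p -> en j = Some p -> i = j.
Proof.
  intros Hi Hj. destruct (Nat.lt_total i j) as [H|[H|H]]; auto.
  - pose proof (en_lt i j p p Hi Hj H); lia.
  - pose proof (en_lt j i p p Hj Hi H); lia.
Qed.

Lemma en_all m : c m = true -> exists i, en i = Some m.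
Proof.
  induction m as [m IH] using (well_founded_induction Wf_nat.lt_wf). intros Hm.
  destruct m as [|m'].
  - exists 0%nat. simpl. rewrite Hm. auto.
  - destruct (last_start c m') as [a [Ha1 [Ha2 Ha3]]].
    destruct (c a) eqn:Eca.
    + destruct (IH a ltac:(lia) Eca) as [i Hi]. exists (S i). simpl. rewrite Hi.
      apply nextc_char_Some; auto; [lia|]. intros k Hk. apply Ha3; lia.
    + assert (a = 0%nat).
      { unfold st in Ha2. rewrite Eca, orb_false_r in Ha2. apply Nat.eqb_eq; auto. }
      subst a. exists 0%nat. simpl. rewrite Eca. apply nextc_char_Some; auto; [lia|].
      intros k Hk. apply Ha3; lia.
Qed.

Definition pv (i : nat) : nat := match en i with Some p => p | None => 0%nat end.

Definition fhi (i : nat) : option nat :=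
  match en (S i) with Some q => Some (lsb x q) | None => msupp x end.

Definition fI (i : nat) : interval := mkInterval (pv i) (fhi i).

Definition sI (i : nat) : R := Endc x L c (pv i) - Su x (pv i).

Lemma fI_props i p : en i = Some p ->
  lo (fI i) = p /\ x p <> 0 /\ wf_interval (fI i) /\ interval_sum x (fI i) (sI i) /\
  (sI i)^2 = term x L c p /\
  (forall q, en (S i) = Some q -> hi (fI i) = Some (lsb x q) /\ (lsb x q < q)%nat /\
     x (lsb x q) <> 0 /\ (p <= lsb x q)%nat) /\
  (en (S i) = None -> sup_matches_supp x (fI i) /\
     match hi (fI i) with Some h => (p <= h)%nat | None => True end).
Proof.
  intros Hp. pose proof (en_cut i p Hp) as Hcp. pose proof (Hc1 p Hcp) as Hxp.
  assert (Hlo : lo (fI i) = p) by (unfold fI, pv; simpl; rewrite Hp; auto).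
  assert (Hq : forall q, en (S i) = Some q -> hi (fI i) = Some (lsb x q) /\ (lsb x q < q)%nat /\
     x (lsb x q) <> 0 /\ (p <= lsb x q)%nat /\ nextc c p = Some q /\
     forall j, (lsb x q < j < q)%nat -> x j = 0).
  { intros q Hq. simpl in Hq. rewrite Hp in Hq.
    assert (Hpq : (p < q)%nat) by (apply nextc_Some in Hq; lia).
    destruct (lsb_spec x q (ex_intro _ p (conj Hpq Hxp))) as [L1 [L2 L3]].
    split; [unfold fI, fhi; simpl; rewrite Hp, Hq; auto|].
    split; auto. split; auto. split; auto.
    destruct (Nat.le_gt_cases p (lsb x q)); auto. exfalso. apply Hxp. apply L3. lia. }
  assert (HN : en (S i) = None -> hi (fI i) = msupp x /\ nextc c p = None).
  { intros HN. unfold fI, fhi. simpl. simpl in HN. rewrite Hp in HN. rewrite Hp, HN. auto. }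
  assert (Hmp : forall h, msupp x = Some h -> (p <= h)%nat).
  { intros h Hh. apply msupp_Some in Hh. destruct (Nat.le_gt_cases p h); auto.
    exfalso. apply Hxp. apply Hh. lia. }
  assert (Hwf : wf_interval (fI i)).
  { unfold wf_interval. rewrite Hlo. destruct (en (S i)) as [q|] eqn:Eq.
    - destruct (Hq q eq_refl) as [E [_ [_ [E2 _]]]]. rewrite E. auto.
    - destruct (HN eq_refl) as [E _]. rewrite E. destruct (msupp x) eqn:Em; auto. }
  split; auto. split; auto. split; auto. split.
  { apply (isum_iff x L _ _ HL Hwf). unfold sI, pv, Iend. rewrite Hlo, Hp. f_equal.
    unfold Endc. destruct (en (S i)) as [q|] eqn:Eq.
    - destruct (Hq q eq_refl) as [E [E1 [_ [_ [E4 E5]]]]]. rewrite E, E4.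
      apply Su_const; [lia|]. intros j Hj. apply E5; lia.
    - destruct (HN eq_refl) as [E E2]. rewrite E, E2.
      destruct (msupp x) as [h|] eqn:Em; auto.
      apply (lim_const_after x L (S h) HL). intros j Hj.
      apply (msupp_Some x h Em). lia. }
  split.
  { unfold sI, term, pv. rewrite Hp. unfold st. rewrite Hcp, orb_true_r. auto. }
  split.
  { intros q Eq. destruct (Hq q Eq) as [A [B [C [D _]]]]. auto. }
  intros Eq. destruct (HN Eq) as [E _]. unfold sup_matches_supp. rewrite E.
  destruct (msupp x) as [h|] eqn:Em.
  - split; [apply msupp_Some; auto|]. apply Hmp; auto.
  - split; auto. intros N. apply (msupp_None x Em p Hxp N).
Qed.

Lemma en0 : exists p, en 0 = Some p.
Proof.
  destruct (en_all n2 Hc2) as [j Hj]. destruct (en 0) as [p|] eqn:E; eauto.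
  rewrite (en_None 0 j E) in Hj; [discriminate|lia].
Qed.

Lemma term0 : c 0 = false -> term x L c 0 = 0.
Proof.
  intros Hc0. destruct en0 as [p0 Hp0]. pose proof (en_first p0 Hp0) as Hf.
  simpl in Hp0. rewrite Hc0 in Hp0.
  unfold term. replace (st c 0) with true by reflexivity. unfold Endc. rewrite Hp0.
  replace (Su x p0) with (Su x 0); [ring|].
  symmetry. apply Su_const; [lia|]. intros j Hj. apply NNPP. intro Hxj.
  destruct (least_ge (fun m => x m <> 0) 0 (ex_intro _ j (conj (Nat.le_0_l j) Hxj)))
    as [m [_ [Hm1 Hm2]]].
  assert (c m = true).
  { apply Hc3; auto. intros k Hk. apply NNPP. apply Hm2. lia. }
  assert (m <= j)%nat.
  { destruct (Nat.le_gt_cases m j); auto. exfalso. apply (Hm2 j); auto. lia. }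
  rewrite (Hf m) in H; [discriminate|lia].
Qed.

Lemma dom_fam M : exists I, Vs x L c M <= sum_lt (fun i => (sI i)^2) I /\
   (forall K, (forall i, (i < K)%nat <-> en i <> None) -> Vs x L c M <= sum_lt (fun i => (sI i)^2) K).
Proof.
  assert (Hall : forall m, c m = true -> exists i, en i = Some m) by apply en_all.
  set (psi := fun m => match excluded_middle_informative (c m = true) with
     | left H => proj1_sig (constructive_indefinite_description _ (Hall m H))
     | right _ => 0%nat end).
  assert (Hpsi : forall m, c m = true -> en (psi m) = Some m).
  { intros m Hm. unfold psi. destruct excluded_middle_informative; [|tauto].
    destruct constructive_indefinite_description; simpl; auto. }
  assert (Hext : Vs x L c M = sum_lt (fun m => if c m then (sI (psi m))^2 else 0) M).
  { unfold Vs. apply sum_lt_ext. intros m Hm. destruct (c m) eqn:E.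
    - destruct (fI_props (psi m) m (Hpsi m E)) as [_ [_ [_ [_ [H _]]]]]. auto.
    - unfold term, st. rewrite E. destruct (Nat.eqb_spec m 0); [subst; simpl|auto].
      pose proof (term0 E) as T. unfold term, st in T. rewrite E in T. simpl in T. auto. }
  assert (Hinj : forall i j, (i < M)%nat -> (j < M)%nat -> c i = true -> c j = true ->
      psi i = psi j -> i = j).
  { intros i j _ _ Hi Hj E. pose proof (Hpsi i Hi). pose proof (Hpsi j Hj). congruence. }
  destruct (exists_bound psi M) as [B HB]. exists B. split.
  - rewrite Hext. apply (reindex (fun i => (sI i)^2) c psi M B); auto.
    intros; apply pow2_ge_0.
  - intros K HK. rewrite Hext. apply (reindex (fun i => (sI i)^2) c psi M K); auto.
    + intros; apply pow2_ge_0.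
    + intros i Hi Hci. apply HK. rewrite Hpsi; auto. discriminate.
Qed.

Lemma fam_bound I : (forall i, (i < I)%nat -> en i <> None) ->
  sum_lt (fun i => (sI i)^2) I <= J^2.
Proof.
  intros HI. destruct (exists_bound pv I) as [B HB].
  eapply Rle_trans; [|apply (Vs_le x J HJ L HL c B)]. unfold Vs.
  pose proof (reindex (term x L c) (fun _ => true) pv I B) as HR. cbv beta in HR.
  rewrite (sum_lt_ext _ (fun i => term x L c (pv i))).
  - apply HR; auto using term_nonneg.
    intros i j Hi Hj _ _ E. unfold pv in E.
    destruct (en i) as [p|] eqn:Ei; [|exfalso; apply (HI i Hi); auto].
    destruct (en j) as [q|] eqn:Ej; [|exfalso; apply (HI j Hj); auto].
    subst q. apply (en_inj i j p); auto.
  - intros i Hi. destruct (en i) as [p|] eqn:Ei; [|exfalso; apply (HI i Hi); auto].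
    destruct (fI_props i p Ei) as [_ [_ [_ [_ [H _]]]]]. rewrite H. unfold pv. rewrite Ei. auto.
Qed.

Lemma sep_fam : exists i j, en i <> None /\ en j <> None /\ i <> j /\
  in_interval n1 (fI i) /\ in_interval n2 (fI j).
Proof.
  destruct Hcons as [Hn [Hx1 [Hx2 Hz]]]. unfold in_supp in *.
  destruct (en_all n2 Hc2) as [j Hj].
  destruct j as [|i].
  - exfalso. pose proof (en_first n2 Hj) as Hf.
    destruct (least_ge (fun m => x m <> 0) 0 (ex_intro _ n1 (conj (Nat.le_0_l n1) Hx1)))
      as [m [_ [Hm1 Hm2]]].
    assert (c m = true) by (apply Hc3; auto; intros k Hk; apply NNPP; apply Hm2; lia).
    assert (m <= n1)%nat.
    { destruct (Nat.le_gt_cases m n1); auto. exfalso. apply (Hm2 n1); auto. lia. }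
    rewrite Hf in H; [discriminate|lia].
  - pose proof Hj as Hj'. simpl in Hj'. destruct (en i) as [p|] eqn:Ep; [|discriminate].
    exists i, (S i). split; [congruence|split; [congruence|split; [lia|]]].
    destruct (fI_props i p Ep) as [Lo [Xp [_ [_ [_ [Hq _]]]]]].
    destruct (Hq n2 Hj) as [Hh [H1 [H2 H3]]].
    assert (Hpn : (p <= n1)%nat).
    { apply nextc_Some in Hj'. destruct (Nat.le_gt_cases p n1); auto.
      exfalso. apply Xp. apply Hz. lia. }
    assert (Hl : lsb x n2 = n1).
    { destruct (lsb_spec x n2 (ex_intro _ n1 (conj Hn Hx1))) as [A [B C]].
      destruct (Nat.lt_total (lsb x n2) n1) as [H|[H|H]]; auto.
      - exfalso. apply Hx1. apply C. lia.
      - exfalso. apply B. apply Hz. lia. }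
    split.
    + unfold in_interval. rewrite Lo, Hh, Hl. lia.
    + destruct (fI_props (S i) n2 Hj) as [Lo2 [_ [Hw _]]].
      unfold in_interval. unfold wf_interval in Hw. rewrite Lo2 in *.
      destruct (hi (fI (S i))); lia.
Qed.

Lemma family_exists : exists F, norming_partition x F /\
      exists i j, in_F F i /\ in_F F j /\ i <> j /\
        in_interval n1 (fint F i) /\ in_interval n2 (fint F j).
Proof.
  pose proof (J_nonneg x J HJ) as HJ0.
  destruct (classic (exists K, en K = None)) as [HK|HK].
  - destruct (least_ge (fun K => en K = None) 0 (let (K, H) := HK in ex_intro _ K (conj (Nat.le_0_l K) H)))
      as [K [_ [HK1 HK2]]].
    assert (HKiff : forall i, (i < K)%nat <-> en i <> None).
    { intros i. split.
      - intros Hi. apply HK2. lia.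
      - intros Hi. destruct (Nat.le_gt_cases K i); auto. exfalso. apply Hi.
        apply (en_None K i); auto. }
    assert (K0 : (1 <= K)%nat).
    { destruct en0 as [p Hp]. destruct K; [rewrite Hp in HK1; discriminate|lia]. }
    exists (mkFamily (Some K) fI). 
    assert (Hsum : sum_lt (fun i => (sI i)^2) K = J^2).
    { apply Rle_antisym.
      - apply fam_bound. intros; apply HKiff; auto.
      - apply Rnot_lt_le. intro Hlt.
        destruct (Hsup (J^2 - sum_lt (fun i => (sI i)^2) K)) as [M HM]; [lra|].
        destruct (dom_fam M) as [_ [_ H]]. specialize (H K HKiff). lra. }
    unfold norming_partition, norming, wf_family.
    split; [split; [split; [split; [|split]|]|]|].
    + simpl; auto.
    + unfold in_F; cbn [fsize fint]. intros i Hi. destruct (en i) as [p|] eqn:Ep; [|exfalso; apply (HKiff i); auto].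
      apply (fI_props i p Ep).
    + unfold in_F; cbn [fsize fint]. intros i Hi.
      destruct (en (S i)) as [q|] eqn:Eq; [|exfalso; apply (HKiff (S i)); auto].
      destruct (en i) as [p|] eqn:Ep; [|exfalso; apply (HKiff i); auto; lia].
      destruct (fI_props i p Ep) as [_ [_ [_ [_ [_ [Hq _]]]]]].
      destruct (Hq q Eq) as [Hh [H1 _]]. rewrite Hh.
      destruct (fI_props (S i) q Eq) as [Lo _]. rewrite Lo. auto.
    + exists sI. split.
      * unfold in_F; cbn [fsize fint]. intros i Hi. destruct (en i) as [p|] eqn:Ep; [|exfalso; apply (HKiff i); auto].
        apply (fI_props i p Ep).
      * unfold in_F; cbn [fsize fint]. rewrite Hsum. rewrite sqrt_pow2; auto.
    + unfold in_F; cbn [fsize fint]. split; [|split].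
      * intros i Hi. destruct (en (S i)) as [q|] eqn:Eq; [|exfalso; apply (HKiff (S i)); auto].
        destruct (en i) as [p|] eqn:Ep; [|exfalso; apply (HKiff i); auto; lia].
        destruct (fI_props i p Ep) as [Lo [Xp [_ [_ [_ [Hq _]]]]]].
        destruct (Hq q Eq) as [Hh [_ [Hx _]]]. unfold in_supp. rewrite Lo.
        split; auto. exists (lsb x q). auto.
      * destruct (en (pred K)) as [p|] eqn:Ep; [|exfalso; apply (HKiff (pred K)); auto; lia].
        destruct (fI_props (pred K) p Ep) as [Lo [Xp _]]. unfold in_supp. rewrite Lo. auto.
      * destruct (en (pred K)) as [p|] eqn:Ep; [|exfalso; apply (HKiff (pred K)); auto; lia].
        destruct (fI_props (pred K) p Ep) as [_ [_ [_ [_ [_ [_ HN]]]]]].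
        apply HN. replace (S (pred K)) with K by lia. auto.
    + destruct sep_fam as [i [j [Hi [Hj [Hij [H1 H2]]]]]].
      exists i, j. unfold in_F; cbn [fsize fint]. split; [apply HKiff; auto|split; [apply HKiff; auto|auto]].
  - assert (HS : forall i, en i <> None) by (intros i E; apply HK; exists i; auto).
    exists (mkFamily None fI).
    unfold norming_partition, norming, wf_family.
    split; [split; [split; [split; [|split]|]|]|].
    + simpl; auto.
    + unfold in_F; cbn [fsize fint]. intros i _. destruct (en i) as [p|] eqn:Ep; [|exfalso; apply (HS i); auto].
      apply (fI_props i p Ep).
    + unfold in_F; cbn [fsize fint]. intros i _.
      destruct (en (S i)) as [q|] eqn:Eq; [|exfalso; apply (HS (S i)); auto].
      destruct (en i) as [p|] eqn:Ep; [|exfalso; apply (HS i); auto].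
      destruct (fI_props i p Ep) as [_ [_ [_ [_ [_ [Hq _]]]]]].
      destruct (Hq q Eq) as [Hh [H1 _]]. rewrite Hh.
      destruct (fI_props (S i) q Eq) as [Lo _]. rewrite Lo. auto.
    + exists sI. split.
      * unfold in_F; cbn [fsize fint]. intros i _. destruct (en i) as [p|] eqn:Ep; [|exfalso; apply (HS i); auto].
        apply (fI_props i p Ep).
      * unfold in_F; cbn [fsize fint]. exists (J^2). split; [|rewrite sqrt_pow2; auto].
        assert (H : is_lim_seq (sum_n (fun i => (sI i)^2)) (J^2)).
        { apply is_lim_seq_spec. intros eps.
          destruct (Hsup eps (cond_pos eps)) as [M HM].
          destruct (dom_fam M) as [I [HI _]].
          exists I. intros n Hn. rewrite sum_n_lt.
          assert (sum_lt (fun i => (sI i)^2) I <= sum_lt (fun i => (sI i)^2) (S n))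
            by (apply sum_lt_mono; [intros; apply pow2_ge_0|lia]).
          assert (sum_lt (fun i => (sI i)^2) (S n) <= J^2)
            by (apply fam_bound; intros; apply HS).
          apply Rabs_def1; lra. }
        exact H.
    + unfold in_F; cbn [fsize fint]. intros i.
      destruct (en (S i)) as [q|] eqn:Eq; [|exfalso; apply (HS (S i)); auto].
      destruct (en i) as [p|] eqn:Ep; [|exfalso; apply (HS i); auto].
      destruct (fI_props i p Ep) as [Lo [Xp [_ [_ [_ [Hq _]]]]]].
      destruct (Hq q Eq) as [Hh [_ [Hx _]]]. unfold in_supp. rewrite Lo.
      split; auto. exists (lsb x q). auto.
    + destruct sep_fam as [i [j [Hi [Hj [Hij [H1 H2]]]]]].
      exists i, j. unfold in_F; cbn [fsize fint]. auto.
Qed.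

End Family.


Lemma good_cut (x : seqR) (J L : R) (n1 n2 : nat) :
  Jnorm x = Finite J -> J <= 1 -> is_lim_seq (Su x) L -> extreme_point_BJ x ->
  consecutive_in_supp x n1 n2 ->
  exists c : nat -> bool,
    (forall m, c m = true -> x m <> 0) /\ c n2 = true /\
    (forall m, x m <> 0 -> (forall j, (j < m)%nat -> x j = 0) -> c m = true) /\
    (forall eta, 0 < eta -> exists M, J^2 - eta < Vs x L c M).
Proof.
  intros HJ HJ1 HL Hext Hcons.
  pose proof Hcons as [Hn [Hx1 [Hx2 Hz]]].
  pose proof (B1_pert x J L n1 n2 HJ HJ1 HL Hext Hn) as HB.
  destruct (compact_limit x J HJ L HL n1 n2 HB) as [g [[m [Hm1 Hm2]] Hg]].
  exists (Nc x g). split; [|split; [|split]].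
  - apply Nc_supp.
  - apply (Nc_intro x g n2 m); auto; [lia|unfold st; rewrite Hm2, orb_true_r; auto|].
    intros j Hj. apply Hz. lia.
  - intros k Hk Hb. apply (Nc_intro x g k 0); [auto|lia|reflexivity|intros j Hj; apply Hb; lia].
  - intros eta Heta. destruct (Hg eta Heta) as [M HM].
    destruct (Nc_sup x L HL g M) as [M' HM']. exists M'. lra.
Qed.

Theorem proposition3p14 (x : seqR) :
  extreme_point_BJ x ->
  separated_by_partitions x /\
  (forall n1 n2, consecutive_in_supp x n1 n2 -> x n1 * x n2 < 0).
Proof.
  intros Hext. pose proof Hext as [HB _].
  assert (H0 : Rbar_le (Finite 0) (Jnorm x)).
  { pose proof (Lub_Rbar_correct (Jvalues x)) as [Hub _]. apply Hub.
    exists 0%nat, (fun _ => mkInterval 0 None), (fun _ => 0).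
    split; [intros; lia|split; [intros; lia|split; [intros; lia|]]].
    simpl. rewrite sqrt_0; auto. }
  unfold BJ in HB.
  destruct (Jnorm x) as [J| |] eqn:EJ; simpl in HB, H0; try contradiction.
  assert (HJ : Jnorm x = Finite J) by auto.
  destruct (conv x J HJ) as [L HL].
  split.
  - unfold separated_by_partitions. split; [unfold inJ, is_finite; rewrite HJ; reflexivity|].
    intros n1 n2 Hcons.
    destruct (good_cut x J L n1 n2 HJ HB HL Hext Hcons) as [c [H1 [H2 [H3 H4]]]].
    apply (family_exists x J HJ L HL n1 n2 Hcons c H1 H2 H3 H4).
  - intros n1 n2 Hcons.
    destruct (good_cut x J L n1 n2 HJ HB HL Hext Hcons) as [c [H1 [H2 [H3 H4]]]].
    apply (local_sign x J HJ L HL n1 n2 Hcons c H1 H2 H4).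
Qed.
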